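(* Let $O$ be a set of Boolean functions. If $O\preceq\{\land,\top,\bot\}$ or $O\preceq\{\lor,\top,\bot\}$ or $O\preceq\{\neg,\bot\}$, then every $\mathrm{PL}_O$-formula $\phi$ is uniquely characterized with respect to $\mathrm{PL}_O$ by a set of at most $|\phi|_{\mathrm{dag}}+1$ labeled examples. Otherwise, there is no polynomial $p$ such that every $\mathrm{PL}_O$-formula $\phi$ is uniquely characterized with respect to $\mathrm{PL}_O$ by a set of at most $p(|\phi|_{\mathrm{dag}})$ labeled examples.
   Context: A Boolean function is a map $\{0,1\}^n\to\{0,1\}$ with $n\ge 1$; the constants $\top,\bot$ are treated as constant unary Boolean functions; $\land,\lor,\neg$ are the usual Boolean functions. For a set $O$ of Boolean functions, $\langle O\rangle$ is the smallest set of Boolean functions containing $O$ and all projections and closed under composition; $O\preceq O'$ means $\langle O\rangle\subseteq\langle O'\rangle$. Fix a countably infinite set of propositional variables. $\mathrm{PL}_O$ is the set of formulas generated by $\phi::=x\mid f(\phi_1,\dots,\phi_n)$ with $x$ a variable and $f\in O$ of arity $n$, with the obvious semantics under truth assignments $V$; two formulas are equivalent if they agree under every truth assignment. $|\phi|_{\mathrm{dag}}$ is the number of distinct subformulas of $\phi$. A labeled example is a pair $(V,\mathrm{lab})$ with $V$ a truth assignment and $\mathrm{lab}\in\{0,1\}$; $\phi$ fits it if $\phi$ evaluates to $\mathrm{lab}$ under $V$. A set $E$ of labeled examples uniquely characterizes $\phi$ with respect to $\mathrm{PL}_O$ if $\phi$ fits all of $E$ and every $\mathrm{PL}_O$-formula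 fitting all of $E$ is equivalent to $\phi$. *)

(* Defs.v *)
From mathcomp Require Import all_boot all_order all_algebra.
From Stdlib Require List.
Set Implicit Arguments. Unset Strict Implicit. Unset Printing Implicit Defensive.

(* A Boolean function of arity n.+1 (arity >= 1): {0,1}^(n+1) -> {0,1}. *)
Definition bfun (n : nat) := {ffun n.+1.-tuple bool -> bool}.
Definition BF := {n : nat & bfun n}.
Definition mkBF (n : nat) (f : bfun n) : BF := existT bfun n f.
Definition arity (f : BF) : nat := (projT1 f).+1.

(* Concrete connectives; constants are unary constant functions. *)
Definition and_bf : BF := mkBF (n := 1) [ffun x : 2.-tuple bool => tnth x ord0 && tnth x ord_max].
Definition or_bf  : BF := mkBF (n := 1) [ffun x : 2.-tuple bool => tnth x ord0 || tnth x ord_max].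
Definition neg_bf : BF := mkBF (n := 0) [ffun x : 1.-tuple bool => ~~ tnth x ord0].
Definition top_bf : BF := mkBF (n := 0) [ffun _ : 1.-tuple bool => true].
Definition bot_bf : BF := mkBF (n := 0) [ffun _ : 1.-tuple bool => false].

Definition bfset := BF -> Prop.

Definition proj_bf (n : nat) (i : 'I_n.+1) : BF := mkBF [ffun x : n.+1.-tuple bool => tnth x i].

Definition comp_bf (n m : nat) (f : bfun n) (gs : 'I_n.+1 -> bfun m) : BF :=
  mkBF [ffun x : m.+1.-tuple bool => f [tuple gs i x | i < n.+1]].

Inductive clone (O : bfset) : BF -> Prop :=
| cl_base f : O f -> clone O f
| cl_proj n (i : 'I_n.+1) : clone O (proj_bf i)
| cl_comp n m (f : bfun n) (gs : 'I_n.+1 -> bfun m) :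
    clone O (mkBF f) -> (forall i, clone O (mkBF (gs i))) -> clone O (comp_bf f gs).

Definition preceq (O O' : bfset) : Prop := forall f, clone O f -> clone O' f.

Definition set_and_top_bot : bfset := fun f => f = and_bf \/ f = top_bf \/ f = bot_bf.
Definition set_or_top_bot  : bfset := fun f => f = or_bf \/ f = top_bf \/ f = bot_bf.
Definition set_neg_bot     : bfset := fun f => f = neg_bf \/ f = bot_bf.

Inductive formula : Type :=
| Var : nat -> formula
| App : BF -> list formula -> formula.

Inductive inPL (O : bfset) : formula -> Prop :=
| inPL_var x : inPL O (Var x)
| inPL_app f args : O f -> size args = arity f ->
    (forall a, List.In a args -> inPL O a) -> inPL O (App f args).

Definition assignment := nat -> bool.

Definition bf_apply (f : BF) (vals : seq bool) : bool :=
  projT2 f [tuple nth false vals i | i < (projT1 f).+1].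

Fixpoint eval (V : assignment) (phi : formula) : bool :=
  match phi with
  | Var x => V x
  | App f args => bf_apply f (map (eval V) args)
  end.

Definition equivalent (phi psi : formula) : Prop := forall V, eval V phi = eval V psi.

Inductive subform : formula -> formula -> Prop :=
| sub_refl phi : subform phi phi
| sub_app psi a f args : List.In a args -> subform psi a -> subform psi (App f args).

Definition dag_size (phi : formula) (k : nat) : Prop :=
  exists l : list formula, List.NoDup l /\ (forall psi, List.In psi l <-> subform psi phi)
                        /\ length l = k.

Definition example := (assignment * bool)%type.
Definition fits (phi : formula) (e : example) : Prop := eval e.1 phi = e.2.

Definition uniquely_characterizes (O : bfset) (E : seq example) (phi : formula) : Prop :=
  (forall e, List.In e E -> fits phi e) /\
  (forall psi, inPL O psi -> (forall e, List.In e E -> fits psi e) -> equivalent psi phi).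

(* Main.v *)
Require Import Defs.
From mathcomp Require Import all_boot all_order all_algebra.
From Stdlib Require Import Classical ClassicalEpsilon Lia.
From mathcomp Require Import zify.
Set Implicit Arguments. Unset Strict Implicit. Unset Printing Implicit Defensive.

Lemma formula_ind' (P : formula -> Prop) :
  (forall x, P (Var x)) ->
  (forall f args, (forall a, List.In a args -> P a) -> P (App f args)) ->
  forall phi, P phi.
Proof.
move=> HV HA; refine (fix IH phi := match phi with
  | Var x => HV x
  | App f args => HA f args ((fix IHl (l : seq formula) : forall a, List.In a l -> P a :=
       match l with
       | [::] => fun a H => match H with end
       | b :: l' => fun a H => match H with
                               | or_introl E => match E with erefl => IH b end
                               | or_intror H' => IHl l' a H'
                               end
       end) args)
  end).
Qed.

Fixpoint subst (s : nat -> formula) (phi : formula) : formula :=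
  match phi with
  | Var x => s x
  | App f args => App f (map (subst s) args)
  end.

Lemma map_ext_In (A B : Type) (f g : A -> B) (l : seq A) :
  (forall a, List.In a l -> f a = g a) -> map f l = map g l.
Proof.
elim: l => //= a l IH H; rewrite H; last by left.
by rewrite IH // => b Hb; apply: H; right.
Qed.

Lemma In_map (A B : Type) (f : A -> B) (l : seq A) b :
  List.In b (map f l) -> exists a, List.In a l /\ b = f a.
Proof. elim: l => //= a l IH [<-|H]; first by exists a; split; [left|].
by case: (IH H) => c [Hc ->]; exists c; split; [right|]. Qed.

Lemma In_map2 (A B : Type) (f : A -> B) (l : seq A) a :
  List.In a l -> List.In (f a) (map f l).
Proof. elim: l => //= c l IH [->|H]; first by left. by right; exact: IH. Qed.

Lemma eval_subst V s phi : eval V (subst s phi) = eval (fun x => eval V (s x)) phi.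
Proof.
elim/formula_ind': phi => //= f args IH; congr bf_apply.
rewrite -map_comp; apply: map_ext_In => a Ha /=; exact: IH.
Qed.

Lemma inPL_subst O s phi : inPL O phi -> (forall x, inPL O (s x)) -> inPL O (subst s phi).
Proof.
move=> H Hs; induction H as [x|f args Of Hsz _ IH] => /=; first exact: Hs.
constructor => //; first by rewrite size_map.
move=> a Ha; case: (In_map Ha) => b [Hb ->]; exact: IH.
Qed.

Lemma size_length (A : Type) (l : seq A) : size l = length l.
Proof. by elim: l => //= a l ->. Qed.

Lemma nth_map_eval V (args : seq formula) i :
  nth false (map (eval V) args) i = if (i < size args)%N then eval V (nth (Var 0) args i) else false.
Proof. elim: args i => [|a l IH] [|i] //=. Qed.

Lemma nth_In (args : seq formula) i : (i < size args)%N -> List.In (nth (Var 0) args i) args.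
Proof. elim: args i => [|a l IH] [|i] //=; [by left| move=> H; right; exact: IH]. Qed.

Lemma eval_ext V V' phi : (forall x, V x = V' x) -> eval V phi = eval V' phi.
Proof.
move=> H; elim/formula_ind': phi => //= f args IH; congr bf_apply.
by apply: map_ext_In.
Qed.

Fixpoint subs (phi : formula) : seq formula :=
  phi :: match phi with
         | Var _ => [::]
         | App f args => flatten (map subs args)
         end.

Lemma In_cat (A : Type) (s1 s2 : seq A) x :
  List.In x (s1 ++ s2) <-> List.In x s1 \/ List.In x s2.
Proof.
elim: s1 => [|a s1 IH] /=; first by split => [H|[[]|H]] //; right.
split; first by case=> [->|/IH [H|H]]; [left; left|left; right|right].
by case=> [[->|H]|H]; [left|right; apply/IH; left|right; apply/IH; right].
Qed.

Lemma In_flatten (A : Type) (ls : seq (seq A)) l x :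
  List.In l ls -> List.In x l -> List.In x (flatten ls).
Proof.
elim: ls => //= l0 ls IH [<-|H] Hx; apply/In_cat; first by left.
by right; apply: IH.
Qed.

Lemma subform_subs psi phi : subform psi phi -> List.In psi (subs phi).
Proof.
elim=> [phi0|psi0 a f args Ha _ IH]; first by case: phi0 => * /=; left.
right; apply: In_flatten IH; exact: In_map2.
Qed.

Definition dagle (phi : formula) (N : nat) :=
  exists L : seq formula, (size L <= N)%N /\ forall psi, subform psi phi -> List.In psi L.

Lemma nodup_filter (A : Type) (L : seq A) (P : A -> Prop) :
  exists L', List.NoDup L' /\ (forall x, List.In x L' <-> List.In x L /\ P x) /\ (size L' <= size L)%N.
Proof.
elim: L => [|a L [L' [ND [HL Hs]]]]; first by exists [::]; split; [constructor|split=> // x; split=> [|[]]].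
case: (classic (P a /\ ~ List.In a L')) => [[Pa Na]|H].
  exists (a :: L'); split; first by constructor.
  split=> [x|]; last by rewrite /= ltnS.
  split=> /=; first by case=> [<-|/HL [Hx Px]]; split => //; [left|right].
  by case=> [[<-|Hx] Px]; [left|right; apply/HL].
exists L'; split => //; split => [x|]; last by apply: (leq_trans Hs).
split; first by move/HL => [Hx Px]; split => //; right.
case=> [[<-|Hx] Px]; last by apply/HL.
by apply: NNPP => Hn; apply: H.
Qed.

Lemma dagle_dag phi N : dagle phi N -> exists k, (k <= N)%N /\ dag_size phi k.
Proof.
case=> L [HN HL]; case: (nodup_filter L (fun psi => subform psi phi)) => L' [ND [HL' Hs]].
exists (size L'); split; first exact: leq_trans HN.
exists L'; split => //; split; last by rewrite size_length.
move=> psi; split; first by move/HL' => [].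
by move=> H; apply/HL'; split => //; apply: HL.
Qed.

Lemma subform_Var psi x : subform psi (Var x) -> psi = Var x.
Proof. by move=> H; inversion H. Qed.

Lemma dagle_Var x : dagle (Var x) 1.
Proof. by exists [:: Var x]; split => // psi /subform_Var ->; left. Qed.

Lemma subform_trans a b c : subform a b -> subform b c -> subform a c.
Proof.
move=> H1 H2; elim: H2 a H1 => // psi0 a0 f args Ha _ IH a H.
by apply: sub_app Ha _; apply: IH.
Qed.

Lemma subform_subst s psi phi : subform psi (subst s phi) ->
  (exists H, subform H phi /\ psi = subst s H) \/ (exists v, subform psi (s v)).
Proof.
elim/formula_ind': phi psi => [x|f args IH] psi /= Hs; first by right; exists x.
inversion Hs as [|psi' a f' args' Ha Hsa]; subst; first by left; exists (App f args); split => //; constructor.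
case: (In_map Ha) => b [Hb Eb]; subst.
case: (IH _ Hb _ Hsa) => [[H [HH ->]]|[v Hv]]; last by right; exists v.
by left; exists H; split => //; apply: sub_app Hb HH.
Qed.

Definition s3 (a b c : formula) (v : nat) : formula :=
  match v with 0 => a | 1 => b | _ => c end.
Definition g3 (G a b c : formula) := subst (s3 a b c) G.

Lemma dagle_mono phi N N' : dagle phi N -> (N <= N')%N -> dagle phi N'.
Proof. by case=> L [HN HL] HNN; exists L; split => //; apply: leq_trans HNN. Qed.

Lemma dagle_g3 G a b c Na Nb Nc : dagle a Na -> dagle b Nb -> dagle c Nc ->
  dagle (g3 G a b c) (size (subs G) + (Na + Nb + Nc)).
Proof.
case=> La [HNa HLa] [Lb [HNb HLb]] [Lc [HNc HLc]].
exists (map (subst (s3 a b c)) (subs G) ++ (La ++ Lb ++ Lc)); split.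
  by rewrite !size_cat size_map leq_add2l addnA leq_add // leq_add.
move=> psi /subform_subst [[H [HH ->]]|[v Hv]]; apply/In_cat.
  by left; apply: In_map2; apply: subform_subs.
right; apply/In_cat; case: v Hv => [|[|v]] /= Hv; first by left; apply: HLa.
  by right; apply/In_cat; left; apply: HLb.
by right; apply/In_cat; right; apply: HLc.
Qed.

Lemma dagle_foldr (op : formula -> formula -> formula) c init N0 (T : nat -> formula) M l :
  (forall a b Na Nb, dagle a Na -> dagle b Nb -> dagle (op a b) (c + (Na + Nb))) ->
  dagle init N0 -> (forall i, dagle (T i) M) ->
  dagle (foldr op init (map T l)) (N0 + size l * (c + M)).
Proof.
move=> Hop H0 HT; elim: l => [|i l IH] /=; first by rewrite mul0n addn0.
apply: dagle_mono (Hop _ _ _ _ (HT i) IH) _.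
by rewrite mulSn; lia.
Qed.

Definition monoT n (f : bfun n) := forall a b : n.+1.-tuple bool,
  (forall i, tnth a i ==> tnth b i) -> f a ==> f b.
Definition meetT n (f : bfun n) := forall a b : n.+1.-tuple bool,
  f a -> f b -> f [tuple tnth a i && tnth b i | i < n.+1].
Definition joinT n (f : bfun n) := forall a b : n.+1.-tuple bool,
  ~~ f a -> ~~ f b -> ~~ f [tuple tnth a i || tnth b i | i < n.+1].
Definition SA n (f : bfun n) := monoT f /\ meetT f.
Definition SB n (f : bfun n) := monoT f /\ joinT f.
Definition SC n (f : bfun n) := exists i, forall a b : n.+1.-tuple bool, tnth a i = tnth b i -> f a = f b.

Lemma mono_comp n m (f : bfun n) (gs : 'I_n.+1 -> bfun m) :
  monoT f -> (forall i, monoT (gs i)) -> monoT (projT2 (comp_bf f gs)).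
Proof.
move=> Hf Hg a b Hab /=; rewrite !ffunE; apply: Hf => i; rewrite !tnth_mktuple.
exact: Hg.
Qed.

Lemma clone_SA h : clone set_and_top_bot h -> SA (projT2 h).
Proof.
elim=> [f [->|[->|->]]|n i|n m f gs _ [Hf1 Hf2] _ IH].
- split=> [a b H|a b]; rewrite /= !ffunE //.
  by move: (H ord0) (H ord_max); do 2 case: (tnth a _); do 2 case: (tnth b _).
  by move=> /andP [H1 H2] /andP [H3 H4]; rewrite !tnth_mktuple H1 H2 H3 H4.
- by split=> [a b H|a b]; rewrite /= !ffunE.
- by split=> [a b H|a b]; rewrite /= !ffunE.
- split=> [a b H|a b]; rewrite /= !ffunE; first exact: H.
  by rewrite tnth_mktuple => -> ->.
- split; first by apply: mono_comp => // j; case: (IH j).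
  move=> a b /=; rewrite !ffunE => Ha Hb.
  have := Hf2 _ _ Ha Hb; apply/implyP/Hf1 => j; rewrite !tnth_mktuple.
  case: (IH j) => Hm Hmt; apply/implyP => /andP [H1 H2].
  by have := Hmt _ _ H1 H2.
Qed.

Lemma clone_SB h : clone set_or_top_bot h -> SB (projT2 h).
Proof.
elim=> [f [->|[->|->]]|n i|n m f gs _ [Hf1 Hf2] _ IH].
- split=> [a b H|a b]; rewrite /= !ffunE //.
  by move: (H ord0) (H ord_max); do 2 case: (tnth a _); do 2 case: (tnth b _).
  rewrite !negb_or => /andP [H1 H2] /andP [H3 H4]; rewrite !tnth_mktuple.
  by move: H1 H2 H3 H4; do 2 case: (tnth a _); do 2 case: (tnth b _).
- by split=> [a b H|a b]; rewrite /= !ffunE.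
- by split=> [a b H|a b]; rewrite /= !ffunE.
- split=> [a b H|a b]; rewrite /= !ffunE; first exact: H.
  by rewrite tnth_mktuple => /negbTE -> /negbTE ->.
- split; first by apply: mono_comp => // j; case: (IH j).
  move=> a b /=; rewrite !ffunE => Ha Hb.
  have := Hf2 _ _ Ha Hb; apply: contra; apply/implyP/Hf1 => j; rewrite !tnth_mktuple.
  case: (IH j) => Hm Hmt; apply/implyP; apply: contraLR; rewrite negb_or => /andP [H1 H2].
  by have := Hmt _ _ H1 H2.
Qed.

Lemma clone_SC h : clone set_neg_bot h -> SC (projT2 h).
Proof.
elim=> [f [->|->]|n i|n m f gs _ [i Hi] _ IH].
- by exists ord0 => a b /=; rewrite !ffunE => ->.
- by exists ord0 => a b /=; rewrite !ffunE.
- by exists i => a b /=; rewrite !ffunE.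
- case: (IH i) => j Hj; exists j => a b Hab /=; rewrite !ffunE; apply: Hi.
  by rewrite !tnth_mktuple; apply: Hj.
Qed.

Definition monoF (Phi : assignment -> bool) :=
  forall V V' : assignment, (forall x, V x ==> V' x) -> Phi V ==> Phi V'.
Definition meetF (Phi : assignment -> bool) :=
  forall V V' : assignment, Phi V -> Phi V' -> Phi (fun x => V x && V' x).
Definition joinF (Phi : assignment -> bool) :=
  forall V V' : assignment, ~~ Phi V -> ~~ Phi V' -> ~~ Phi (fun x => V x || V' x).
Definition dep1F (Phi : assignment -> bool) :=
  exists x, forall V V' : assignment, V x = V' x -> Phi V = Phi V'.

Lemma eval_App V n (g : bfun n) args :
  eval V (App (mkBF g) args) = g [tuple nth false (map (eval V) args) i | i < n.+1].
Proof. by []. Qed.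

Lemma PL_mono O : (forall f, O f -> monoT (projT2 f)) ->
  forall phi, inPL O phi -> monoF (fun V => eval V phi).
Proof.
move=> HO phi H; induction H as [x|f args Of Hsz _ IH]; first by move=> V V' /= H.
move=> V V' HV; case: f Of Hsz => n g Of Hsz.
rewrite !eval_App; apply: (HO _ Of) => i; rewrite !tnth_mktuple !nth_map_eval.
by case: ifP => // Hi; apply: IH => //; apply: nth_In.
Qed.

Lemma PL_meet O : (forall f, O f -> monoT (projT2 f) /\ meetT (projT2 f)) ->
  forall phi, inPL O phi -> meetF (fun V => eval V phi).
Proof.
move=> HO phi H.
induction H as [x|f args Of Hsz Hargs IH]; first by move=> V V' /= -> ->.
move=> V V'; case: f Of Hsz => n g Of Hsz; rewrite !eval_App => H1 H2.
have := (HO _ Of).2 _ _ H1 H2; apply/implyP/((HO _ Of).1) => i.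
rewrite !tnth_mktuple !nth_map_eval; case: ifP => // Hi.
apply/implyP => /andP [Ha Hb]; exact: (IH _ (nth_In Hi)).
Qed.

Lemma PL_join O : (forall f, O f -> monoT (projT2 f) /\ joinT (projT2 f)) ->
  forall phi, inPL O phi -> joinF (fun V => eval V phi).
Proof.
move=> HO phi H; induction H as [x|f args Of Hsz Hargs IH].
  by move=> V V' /= /negbTE -> /negbTE ->.
move=> V V'; case: f Of Hsz => n g Of Hsz; rewrite !eval_App => H1 H2.
have := (HO _ Of).2 _ _ H1 H2; apply: contra; apply/implyP/((HO _ Of).1) => i.
rewrite !tnth_mktuple !nth_map_eval; case: ifP => // Hi.
apply/implyP; apply: contraLR; rewrite negb_or => /andP [Ha Hb].
by apply: IH => //; apply: nth_In.
Qed.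

Lemma PL_dep1 O : (forall f, O f -> SC (projT2 f)) ->
  forall phi, inPL O phi -> dep1F (fun V => eval V phi).
Proof.
move=> HO phi H; induction H as [x|f args Of Hsz Hargs IH].
  by exists x => V V' /=.
case: f Of Hsz => n g Of Hsz; case: (HO _ Of) => i Hi.
have [Hlt|Hge] := ltnP i (size args).
  case: (IH _ (nth_In Hlt)) => x Hx; exists x => V V' HV; cbv beta; rewrite !eval_App; apply: Hi.
  by rewrite !tnth_mktuple !nth_map_eval Hlt; apply: Hx.
exists 0 => V V' _; cbv beta; rewrite !eval_App; apply: Hi.
by rewrite !tnth_mktuple !nth_map_eval ltnNge Hge.
Qed.

Fixpoint vars (phi : formula) : seq nat :=
  match phi with
  | Var x => [:: x]
  | App f args => flatten (map vars args)
  end.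

Lemma mem_flatten_map (A : Type) (F : A -> seq nat) (l : seq A) x :
  x \in flatten (map F l) -> exists a, List.In a l /\ x \in F a.
Proof.
elim: l => //= a l IH; rewrite mem_cat => /orP [H|/IH [b [Hb Hx]]].
  by exists a; split => //; left.
by exists b; split => //; right.
Qed.

Lemma mem_flatten_map2 (A : Type) (F : A -> seq nat) (l : seq A) a x :
  List.In a l -> x \in F a -> x \in flatten (map F l).
Proof.
elim: l => //= b l IH [<-|H] Hx; rewrite mem_cat; first by rewrite Hx.
by rewrite IH // orbT.
Qed.

Lemma eval_vars V V' phi : (forall x, x \in vars phi -> V x = V' x) -> eval V phi = eval V' phi.
Proof.
elim/formula_ind': phi => [x|f args IH] /= H; first by apply: H; rewrite inE.
congr bf_apply; apply: map_ext_In => a Ha; apply: IH => // x Hx; apply: H.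
exact: mem_flatten_map2 Hx.
Qed.

Lemma vars_subform x phi : x \in vars phi -> subform (Var x) phi.
Proof.
elim/formula_ind': phi => [y|f args IH] /=; first by rewrite inE => /eqP ->; constructor.
move/mem_flatten_map => [a [Ha Hx]]; apply: (sub_app f Ha); exact: IH.
Qed.

Lemma In_mem (T : eqType) (x : T) s : List.In x s -> x \in s.
Proof. elim: s => //= a s IH [->|H]; rewrite inE; first by rewrite eqxx. by rewrite IH ?orbT. Qed.

Lemma mem_In (T : eqType) (x : T) s : x \in s -> List.In x s.
Proof. elim: s => //= a s IH; rewrite inE => /orP [/eqP ->|H]; first by left. by right; exact: IH. Qed.

Lemma count_vars phi k (S : seq nat) : dag_size phi k -> uniq S ->
  (forall x, x \in S -> x \in vars phi) -> (size S <= k)%N.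
Proof.
case=> l [ND [Hl <-]] HU HS.
have ND' : List.NoDup (map Var S).
  elim: S HU {HS Hl} => [|x S IH] /=; first by constructor.
  move=> /andP [Hx HU]; constructor; last exact: IH.
  move=> Hin; case: (In_map Hin) => y [Hy [E]]; subst y; move: Hx; by rewrite (In_mem Hy).
rewrite -(size_map Var S) size_length; apply/leP; apply: List.NoDup_incl_length ND' _.
move=> psi Hin; case: (In_map Hin) => x [Hx ->]; apply/Hl; apply: vars_subform; apply: HS; exact: In_mem.
Qed.

Definition Vall : assignment := fun _ => true.
Definition V0 : assignment := fun _ => false.
Definition Vx (x : nat) : assignment := fun y => y != x.
Definition Ex (x : nat) : assignment := fun y => y == x.

Lemma mono_all (Theta : assignment -> bool) (S : seq nat) :
  monoF Theta -> Theta (fun y => y \in S) -> (forall x, x \in S -> Theta (Vx x) = false) ->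
  forall V, Theta V = all V S.
Proof.
move=> Hm H1 H2 V; case: (boolP (all V S)) => [/allP HS|].
  by apply: (implyP (Hm _ _ _) H1) => y; apply/implyP => /HS.
rewrite -has_predC => /hasP [x Hx /= HVx].
have Hle : Theta V ==> Theta (Vx x).
  by apply: Hm => y; rewrite /Vx; apply/implyP; apply: contraTneq => ->; rewrite (negbTE HVx).
by move: Hle; rewrite H2 //; case: (Theta V).
Qed.

Lemma mono_any (Theta : assignment -> bool) (S : seq nat) :
  monoF Theta -> ~~ Theta (fun y => y \notin S) -> (forall x, x \in S -> Theta (Ex x) = true) ->
  forall V, Theta V = has V S.
Proof.
move=> Hm H1 H2 V; case: (boolP (has V S)) => [/hasP [x Hx HVx]|].
  by apply: (implyP (Hm (Ex x) _ _)); [move=> y; rewrite /Ex; apply/implyP => /eqP ->|rewrite H2].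
rewrite -all_predC => /allP HS; apply/negbTE; apply: contraNN H1 => HV.
apply: (implyP (Hm V _ _)) => // y; apply/implyP => HVy; apply/negP => Hy.
by move: (HS _ Hy); rewrite /= HVy.
Qed.

Lemma char_A O phi k : (forall f, O f -> SA (projT2 f)) -> inPL O phi -> dag_size phi k ->
  exists E : seq example, (size E <= k.+1)%N /\ uniquely_characterizes O E phi.
Proof.
move=> HO Hphi Hk.
have HmO : forall f, O f -> monoT (projT2 f) by move=> f /HO [].
have Hm := PL_mono HmO.
have Hmt := PL_meet HO.
case: (boolP (eval Vall phi)) => Hall; last first.
  exists [:: (Vall, false)]; split => //; split => [e [<-|[]]|psi Hpsi Hfit V]; first by rewrite /fits /= (negbTE Hall).
  have Hp : eval Vall psi = false by apply: (Hfit (Vall, false)); left.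
  have Z : forall th, monoF th -> th Vall = false -> th V = false.
    by move=> th Hth H; have := Hth V Vall (fun y => implybT _); rewrite H; case: (th V).
  by rewrite (Z _ (Hm _ Hpsi) Hp) (Z _ (Hm _ Hphi) (negbTE Hall)).
case: (boolP (eval V0 phi)) => H0.
  exists [:: (V0, true)]; split => //; split => [e [<-|[]]|psi Hpsi Hfit V]; first by rewrite /fits /= H0.
  have Hp : eval V0 psi = true by apply: (Hfit (V0, true)); left.
  have Z : forall th, monoF th -> th V0 = true -> th V = true.
    by move=> th Hth H; have := Hth V0 V (fun y => implyFb _); rewrite H.
  by rewrite (Z _ (Hm _ Hpsi) Hp) (Z _ (Hm _ Hphi) H0).
set X := undup (vars phi).
set S := [seq x <- X | ~~ eval (Vx x) phi].
set L := [seq x <- X | eval (Vx x) phi].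
have HW : forall L', (forall x, x \in L' -> eval (Vx x) phi) ->
    eval (fun y => all (fun x => y != x) L') phi.
  elim=> [|x L' IH] HL' /=; first by rewrite (eval_ext _ (V' := Vall)).
  rewrite (eval_ext _ (V' := fun y => Vx x y && all (fun x0 => y != x0) L')) //.
  apply: (Hmt _ Hphi); first by apply: HL'; rewrite inE eqxx.
  by apply: IH => y Hy; apply: HL'; rewrite inE Hy orbT.
have HS : eval (fun y => y \in S) phi.
  rewrite (eval_vars (V' := fun y => all (fun x => y != x) L)); last first.
    move=> y Hy; rewrite /S /L !mem_filter.
    have HyX : y \in X by rewrite mem_undup.
    rewrite HyX andbT /=; apply/idP/allP => [Hn x|Ha].
      by rewrite mem_filter => /andP [Hx _]; apply: contraTneq Hx => <-.
    by apply/negP => Hv; have := Ha y; rewrite mem_filter Hv HyX eqxx => /(_ isT).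
  by apply: HW => x; rewrite mem_filter => /andP [].
have HSx : forall x, x \in S -> eval (Vx x) phi = false.
  by move=> x; rewrite mem_filter => /andP [/negbTE].
exists ((fun y => y \in S, true) :: [seq (Vx x, false) | x <- S]); split.
  rewrite /= size_map ltnS; apply: count_vars Hk _ _.
    by rewrite filter_uniq // undup_uniq.
  by move=> x; rewrite mem_filter mem_undup => /andP [].
have Hphi_all := mono_all (Hm _ Hphi) HS HSx.
split => [e [<-|Hin]|psi Hpsi Hfit V]; first exact: HS.
  by case: (In_map Hin) => x [Hx ->]; rewrite /fits /= HSx //; apply: In_mem.
rewrite Hphi_all; apply: (@mono_all (fun V => eval V psi) S (Hm _ Hpsi)).
  by apply: (Hfit (_, true)); left.
move=> x Hx; apply: (Hfit (Vx x, false)); right; apply: In_map2; exact: mem_In.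
Qed.

Lemma char_B O phi k : (forall f, O f -> SB (projT2 f)) -> inPL O phi -> dag_size phi k ->
  exists E : seq example, (size E <= k.+1)%N /\ uniquely_characterizes O E phi.
Proof.
move=> HO Hphi Hk.
have HmO : forall f, O f -> monoT (projT2 f) by move=> f /HO [].
have Hm := PL_mono HmO.
have Hjn := PL_join HO.
case: (boolP (eval V0 phi)) => H0.
  exists [:: (V0, true)]; split => //; split => [e [<-|[]]|psi Hpsi Hfit V]; first by rewrite /fits /= H0.
  have Hp : eval V0 psi = true by apply: (Hfit (V0, true)); left.
  have Z : forall th, monoF th -> th V0 = true -> th V = true.
    by move=> th Hth H; have := Hth V0 V (fun y => implyFb _); rewrite H.
  by rewrite (Z _ (Hm _ Hpsi) Hp) (Z _ (Hm _ Hphi) H0).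
case: (boolP (eval Vall phi)) => Hall; last first.
  exists [:: (Vall, false)]; split => //; split => [e [<-|[]]|psi Hpsi Hfit V]; first by rewrite /fits /= (negbTE Hall).
  have Hp : eval Vall psi = false by apply: (Hfit (Vall, false)); left.
  have Z : forall th, monoF th -> th Vall = false -> th V = false.
    by move=> th Hth H; have := Hth V Vall (fun y => implybT _); rewrite H; case: (th V).
  by rewrite (Z _ (Hm _ Hpsi) Hp) (Z _ (Hm _ Hphi) (negbTE Hall)).
set X := undup (vars phi).
set S := [seq x <- X | eval (Ex x) phi].
set L := [seq x <- X | ~~ eval (Ex x) phi].
have HW : forall L', (forall x, x \in L' -> ~~ eval (Ex x) phi) ->
    ~~ eval (fun y => has (fun x => y == x) L') phi.
  elim=> [|x L' IH] HL' /=; first by rewrite (eval_ext _ (V' := V0)).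
  rewrite (eval_ext _ (V' := fun y => Ex x y || has (fun x0 => y == x0) L')) //.
  apply: (Hjn _ Hphi); first by apply: HL'; rewrite inE eqxx.
  by apply: IH => y Hy; apply: HL'; rewrite inE Hy orbT.
have HS : ~~ eval (fun y => y \notin S) phi.
  rewrite (eval_vars (V' := fun y => has (fun x => y == x) L)); last first.
    move=> y Hy; rewrite /S /L !mem_filter.
    have HyX : y \in X by rewrite mem_undup.
    rewrite HyX andbT /=; apply/idP/hasP => [Hn|[x Hx /eqP Exy]].
      by exists y; rewrite ?eqxx // mem_filter Hn HyX.
    by move: Hx; rewrite -Exy mem_filter => /andP [].
  by apply: HW => x; rewrite mem_filter => /andP [].
have HSx : forall x, x \in S -> eval (Ex x) phi = true.
  by move=> x; rewrite mem_filter => /andP [].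
exists ((fun y => y \notin S, false) :: [seq (Ex x, true) | x <- S]); split.
  rewrite /= size_map ltnS; apply: count_vars Hk _ _.
    by rewrite filter_uniq // undup_uniq.
  by move=> x; rewrite mem_filter mem_undup => /andP [].
have Hphi_any := mono_any (Hm _ Hphi) HS HSx.
split => [e [<-|Hin]|psi Hpsi Hfit V]; first by apply/negbTE.
  by case: (In_map Hin) => x [Hx ->]; rewrite /fits /= HSx //; apply: In_mem.
rewrite Hphi_any; apply: (@mono_any (fun V => eval V psi) S (Hm _ Hpsi)).
  by apply/negbT; apply: (Hfit (_, false)); left.
move=> x Hx; apply: (Hfit (Ex x, true)); right; apply: In_map2; exact: mem_In.
Qed.

Fixpoint fsize (phi : formula) : nat :=
  match phi with Var _ => 1 | App f args => (sumn (map fsize args)).+1 end.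

Lemma fsize_arg a f args : List.In a args -> (fsize a < fsize (App f args))%N.
Proof.
rewrite /= ltnS; elim: args => //= b l IH [->|H]; first exact: leq_addr.
by apply: leq_trans (IH H) _; apply: leq_addl.
Qed.

Lemma dag_pos phi k : dag_size phi k -> (0 < k)%N.
Proof.
case=> l [_ [Hl <-]]; have := proj2 (Hl phi) (Defs.sub_refl phi).
by case: l {Hl}.
Qed.

Lemma dag_App f args k : dag_size (App f args) k -> args <> [::] -> (1 < k)%N.
Proof.
case=> l [ND [Hl <-]]; case: args Hl => // a args' Hl _.
have Hne : a <> App f (a :: args').
  move=> E; have HIn : List.In a (a :: args') by left.
  by have := fsize_arg f HIn; rewrite -E ltnn.
have ND2 : List.NoDup [:: App f (a :: args'); a].
  constructor; last by constructor; [case|constructor].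
  by case => // E; apply: Hne.
apply/leP; apply: (List.NoDup_incl_length ND2) => psi [<-|[<-|[]]]; apply/Hl.
  exact: Defs.sub_refl.
have HIn : List.In a (a :: args') by left.
by apply: (sub_app f HIn); apply: Defs.sub_refl.
Qed.

Lemma dep_const (Theta : assignment -> bool) x :
  (forall V V' : assignment, V x = V' x -> Theta V = Theta V') ->
  forall V, Theta V = Theta (fun _ => V x).
Proof. by move=> H V; apply: H. Qed.

Lemma char_C O phi k : (forall f, O f -> SC (projT2 f)) -> inPL O phi -> dag_size phi k ->
  exists E : seq example, (size E <= k.+1)%N /\ uniquely_characterizes O E phi.
Proof.
move=> HO Hphi Hk.
have Hd := PL_dep1 HO.
case: phi Hphi Hk => [x0|f args] Hphi Hk.
  exists [:: (Ex x0, true); (V0, false)]; split; first by rewrite /= ltnS; apply: dag_pos Hk.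
  split; first by move=> e [<-|[<-|[]]]; rewrite /fits //= /Ex eqxx.
  move=> psi Hpsi Hfit V /=.
  have H1 : eval (Ex x0) psi = true by apply: (Hfit (_, true)); left.
  have H2 : eval V0 psi = false by apply: (Hfit (_, false)); right; left.
  case: (Hd _ Hpsi) => y Hy; rewrite (dep_const Hy).
  case: (eqVneq y x0) => [Eyx|Nyx].
    subst y; case: (V x0); last exact: H2.
    by transitivity (eval (Ex x0) psi) => //; apply: Hy; rewrite /Ex eqxx.
  by move: H1; rewrite (Hy _ V0) ?H2 // /Ex /V0 (negbTE Nyx).
have Hk2 : (1 < k)%N.
  apply: dag_App Hk _; have : size args = arity f by inversion Hphi.
  by case: args {Hphi}.
move: (App f args) Hphi Hk2 => phi Hphi Hk2 {Hk}.
case: (Hd _ Hphi) => x Hx.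
exists [:: (Ex x, eval (Ex x) phi); (Vx x, eval (Vx x) phi); (V0, eval V0 phi)]; split => //.
split; first by move=> e [<-|[<-|[<-|[]]]].
move=> psi Hpsi Hfit V.
have H1 : eval (Ex x) psi = eval (Ex x) phi by apply: (Hfit (_, _)); left.
have H2 : eval (Vx x) psi = eval (Vx x) phi by apply: (Hfit (_, _)); right; left.
have H3 : eval V0 psi = eval V0 phi by apply: (Hfit (_, _)); right; right; left.
case: (Hd _ Hpsi) => y Hy.
have Gx := dep_const Hx; have Gy := dep_const Hy.
rewrite Gx Gy; move: H1 H2 H3; rewrite (Gx (Ex x)) (Gx (Vx x)) (Gy (Ex x)) (Gy (Vx x)) /Ex /Vx eqxx /=.
case: (eqVneq y x) => [->|Nyx]; rewrite ?eqxx /=.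
  by move=> H1 H2 _; case: (V x).
rewrite ?(negbTE Nyx) /= => H1 H2 H3.
have E3 : eval V0 psi = eval (fun _ => false) psi by [].
have E4 : eval V0 phi = eval (fun _ => false) phi by [].
rewrite E3 E4 in H3.
by case: (V x); case: (V y); congruence.
Qed.

Theorem part1 (O : bfset) :
  (preceq O set_and_top_bot \/ preceq O set_or_top_bot \/ preceq O set_neg_bot) ->
     forall (phi : formula), inPL O phi -> forall k : nat, dag_size phi k ->
       exists E : seq example, (size E <= k.+1)%N /\ uniquely_characterizes O E phi.
Proof.
case=> [H|[H|H]] phi Hphi k Hk.
- by apply: char_A Hphi Hk => f Of; apply: clone_SA; apply: H; apply: cl_base.
- by apply: char_B Hphi Hk => f Of; apply: clone_SB; apply: H; apply: cl_base.
- by apply: char_C Hphi Hk => f Of; apply: clone_SC; apply: H; apply: cl_base.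
Qed.

Definition real (O : bfset) n (f : bfun n) :=
  exists G, inPL O G /\ forall V, eval V G = f [tuple V i | i < n.+1].
Definition real3 (O : bfset) (t : bool -> bool -> bool -> bool) :=
  exists G, inPL O G /\ forall V, eval V G = t (V 0) (V 1) (V 2).

Lemma nth_map_iota V n i : (i < n)%N -> nth false (map (eval V) (map Var (iota 0 n))) i = V i.
Proof.
move=> Hi; rewrite -map_comp (nth_map 0) ?size_iota // nth_iota //.
Qed.

Lemma clone_real O h : clone O h -> real O (projT2 h).
Proof.
elim=> [[n g] Of|n i|n m f gs _ [Gf [Hf Ef]] _ IH].
- exists (App (mkBF g) (map Var (iota 0 n.+1))); split.
    constructor => //; first by rewrite size_map size_iota.
    move=> a Ha; case: (In_map Ha) => x [_ ->]; constructor.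
  move=> V; rewrite eval_App; apply: (f_equal g); apply: eq_from_tnth => i.
  by rewrite !tnth_mktuple nth_map_iota.
- by exists (Var i); split; [constructor|move=> V /=; rewrite ffunE tnth_mktuple].
- pose F i := proj1_sig (constructive_indefinite_description _ (IH i)).
  have HF i : inPL O (F i) /\ forall V, eval V (F i) = gs i [tuple V j | j < m.+1].
    exact: (proj2_sig (constructive_indefinite_description _ (IH i))).
  exists (subst (fun j => if (j < n.+1)%N then F (inord j) else Var 0) Gf); split.
    by apply: inPL_subst => // j; case: ifP => _; [case: (HF (inord j))|constructor].
  move=> V; rewrite eval_subst Ef ffunE; apply: (f_equal f); apply: eq_from_tnth => i.
  rewrite !tnth_mktuple ltn_ord inord_val; by case: (HF i) => _ ->.
Qed.

Lemma real_minor O n (f : bfun n) (sigma : 'I_n.+1 -> nat) :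
  real O f -> (forall i, (sigma i < 3)%N) ->
  real3 O (fun x y z => f [tuple nth false [:: x; y; z] (sigma i) | i < n.+1]).
Proof.
case=> G [HG EG] Hs.
exists (subst (fun j => Var (if (j < n.+1)%N then sigma (inord j) else 0)) G); split.
  by apply: inPL_subst => // j; constructor.
move=> V; rewrite eval_subst EG; apply: (f_equal f); apply: eq_from_tnth => i.
rewrite !tnth_mktuple /= ltn_ord inord_val.
by move: (Hs i); case: (sigma i) => [|[|[|]]].
Qed.

Lemma real3_ext O t t' : (forall x y z, t x y z = t' x y z) -> real3 O t -> real3 O t'.
Proof. by move=> H [G [HG EG]]; exists G; split => // V; rewrite EG H. Qed.

Definition projf n (i : 'I_n.+1) : bfun n := [ffun x => tnth x i].
Definition andf : bfun 1 := [ffun x : 2.-tuple bool => tnth x ord0 && tnth x ord_max].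
Definition orf : bfun 1 := [ffun x : 2.-tuple bool => tnth x ord0 || tnth x ord_max].
Definition negf : bfun 0 := [ffun x : 1.-tuple bool => ~~ tnth x ord0].
Definition topf : bfun 0 := [ffun _ : 1.-tuple bool => true].
Definition botf : bfun 0 := [ffun _ : 1.-tuple bool => false].
Definition cstf n (b : bool) : bfun n := [ffun _ => b].

Lemma clone_proj O n (i : 'I_n.+1) : clone O (mkBF (projf i)).
Proof. exact: cl_proj. Qed.

Lemma mkBF_ext n (f g : bfun n) : (forall x, f x = g x) -> mkBF f = mkBF g.
Proof. by move=> H; congr existT; apply/ffunP => x; rewrite H. Qed.

Lemma clone_cst O n b : clone O (mkBF (if b then topf else botf)) -> clone O (mkBF (cstf n b)).
Proof.
move=> H; have -> : mkBF (cstf n b) = comp_bf (if b then topf else botf) (fun _ : 'I_1 => projf (@ord0 n)).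
  by apply: mkBF_ext => x; rewrite !ffunE; case: b {H}; rewrite ffunE.
by apply: cl_comp => // i; apply: clone_proj.
Qed.

Lemma clone_conj O n (l : seq 'I_n.+1) : O and_bf -> l != [::] ->
  exists c : bfun n, clone O (mkBF c) /\ forall x, c x = all (tnth x) l.
Proof.
move=> Hand; elim: l => // i l IH _; case: (eqVneq l [::]) => [->|Hl].
  by exists (projf i); split; [apply: clone_proj|move=> x; rewrite ffunE /= andbT].
case: (IH Hl) => c [Hc Ec].
pose gs (j : 'I_2) := if j == ord0 then projf i else c.
exists [ffun x => andf [tuple gs j x | j < 2]]; split.
  change (clone O (comp_bf andf gs)); apply: cl_comp; first exact: cl_base.
  by move=> j; rewrite /gs; case: ifP => _ //; apply: clone_proj.
by move=> x; rewrite !ffunE !tnth_mktuple /gs /= ffunE Ec.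
Qed.

Lemma clone_disj O n (l : seq 'I_n.+1) : O or_bf -> l != [::] ->
  exists c : bfun n, clone O (mkBF c) /\ forall x, c x = has (tnth x) l.
Proof.
move=> Hor; elim: l => // i l IH _; case: (eqVneq l [::]) => [->|Hl].
  by exists (projf i); split; [apply: clone_proj|move=> x; rewrite ffunE /= orbF].
case: (IH Hl) => c [Hc Ec].
pose gs (j : 'I_2) := if j == ord0 then projf i else c.
exists [ffun x => orf [tuple gs j x | j < 2]]; split.
  change (clone O (comp_bf orf gs)); apply: cl_comp; first exact: cl_base.
  by move=> j; rewrite /gs; case: ifP => _ //; apply: clone_proj.
by move=> x; rewrite !ffunE !tnth_mktuple /gs /= ffunE Ec.
Qed.

Definition onesb n (i : 'I_n.+1) : n.+1.-tuple bool := [tuple j != i | j < n.+1].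
Definition eb n (i : 'I_n.+1) : n.+1.-tuple bool := [tuple j == i | j < n.+1].
Definition cst n (b : bool) : n.+1.-tuple bool := [tuple b | _ < n.+1].

Lemma SA_all n (f : bfun n) : SA f -> f (cst n true) ->
  forall x, f x = all (tnth x) [seq i <- enum 'I_n.+1 | ~~ f (onesb i)].
Proof.
case=> Hm Hmt Hone x; apply/idP/idP.
  move=> Hx; apply/allP => i; rewrite mem_filter => /andP [Hi _]; apply: contraR Hi => Hxi.
  apply: (implyP (Hm x _ _)) Hx => j; rewrite tnth_mktuple.
  by apply/implyP; apply: contraTneq => ->; rewrite (negbTE Hxi).
move: {2}#|[pred j | ~~ tnth x j]| (erefl #|[pred j | ~~ tnth x j]|) => m.
elim: m x => [|m IH] x Hc Hall.
  have -> : x = cst n true.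
    apply: eq_from_tnth => j; rewrite tnth_mktuple; apply: negbFE.
    by have := card0_eq Hc j; rewrite !inE.
  exact: Hone.
have [i Hi] : exists i, ~~ tnth x i.
  have : (0 < #|[pred j | ~~ tnth x j]|)%N by rewrite Hc.
  by case/card_gt0P => j Hj; exists j.
pose x' := [tuple (j == i) || tnth x j | j < n.+1].
have Hx' : f x'.
  apply: IH.
    apply/eqP; rewrite -eqSS -Hc (cardD1 i [pred j | ~~ tnth x j]) inE Hi add1n eqSS; apply/eqP/eq_card => j.
    by rewrite !inE tnth_mktuple negb_or andbC.
  apply/allP => j Hj; rewrite tnth_mktuple; apply/orP; right; exact: (allP Hall).
have Hoi : f (onesb i).
  by apply: negbNE; apply: contra Hi => Hn; apply: (allP Hall); rewrite mem_filter Hn mem_enum.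
have H := Hmt _ _ Hx' Hoi.
suff E : [tuple tnth x' j && tnth (onesb i) j | j < n.+1] = x by rewrite E in H.
apply: eq_from_tnth => j; rewrite !tnth_mktuple; case: (eqVneq j i) => [->|Nji].
  by rewrite (negbTE Hi).
by rewrite andbT /= ?(negbTE Nji).
Qed.

Lemma SB_any n (f : bfun n) : SB f -> ~~ f (cst n false) ->
  forall x, f x = has (tnth x) [seq i <- enum 'I_n.+1 | f (eb i)].
Proof.
case=> Hm Hjn Hzero x; apply/idP/idP; last first.
  case/hasP => i; rewrite mem_filter => /andP [Hi _] Hxi.
  apply: (implyP (Hm (eb i) x _)) Hi => j; rewrite tnth_mktuple.
  by apply/implyP => /eqP ->.
apply: contraLR; rewrite -all_predC.
move: {2}#|[pred j | tnth x j]| (erefl #|[pred j | tnth x j]|) => m.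
elim: m x => [|m IH] x Hc Hall.
  have -> : x = cst n false.
    apply: eq_from_tnth => j; rewrite tnth_mktuple; apply/negbTE.
    by have := card0_eq Hc j; rewrite !inE => ->.
  exact: Hzero.
have [i Hi] : exists i, tnth x i.
  have : (0 < #|[pred j | tnth x j]|)%N by rewrite Hc.
  by case/card_gt0P => j Hj; exists j.
pose x' := [tuple (j != i) && tnth x j | j < n.+1].
have Hx' : ~~ f x'.
  apply: IH.
    apply/eqP; rewrite -eqSS -Hc (cardD1 i [pred j | tnth x j]) inE Hi add1n eqSS; apply/eqP/eq_card => j.
    by rewrite !inE tnth_mktuple.
  apply/allP => j Hj; rewrite /= tnth_mktuple negb_and; apply/orP; right; exact: (allP Hall).
have Hoi : ~~ f (eb i).
  have H := allP Hall i; apply/negP => Hn.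
  have Him : i \in [seq i0 <- enum 'I_n.+1 | f (eb i0)] by rewrite mem_filter Hn mem_enum.
  by have := H Him; rewrite /= Hi.
have H := Hjn _ _ Hx' Hoi.
suff E : [tuple tnth x' j || tnth (eb i) j | j < n.+1] = x by rewrite E in H.
apply: eq_from_tnth => j; rewrite !tnth_mktuple; case: (eqVneq j i) => [->|Nji].
  by rewrite Hi orbT.
by rewrite orbF /= ?(negbTE Nji).
Qed.

Lemma SA_clone n (f : bfun n) : SA f -> clone set_and_top_bot (mkBF f).
Proof.
move=> Hf; case: (boolP (f (cst n true))) => Hone; last first.
  have -> : mkBF f = mkBF (cstf n false).
    apply: mkBF_ext => x; rewrite ffunE; apply/negbTE; apply: contra Hone => Hx.
    by apply: (implyP (Hf.1 x _ _)) Hx => i; rewrite tnth_mktuple implybT.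
  by apply: clone_cst; apply: cl_base; right; right.
case: (boolP (f (cst n false))) => Hz.
  have -> : mkBF f = mkBF (cstf n true).
    apply: mkBF_ext => x; rewrite ffunE.
    by apply: (implyP (Hf.1 _ x _)) Hz => i; rewrite tnth_mktuple.
  by apply: clone_cst; apply: cl_base; right; left.
set S := [seq i <- enum 'I_n.+1 | ~~ f (onesb i)].
have HS := SA_all Hf Hone.
have SN : S != [::].
  apply: contra Hz => /eqP E; by rewrite HS -/S E.
case: (clone_conj (O := set_and_top_bot) (or_introl erefl) SN) => c [Hc Ec].
have -> : mkBF f = mkBF c by apply: mkBF_ext => x; rewrite Ec HS.
exact: Hc.
Qed.

Lemma SB_clone n (f : bfun n) : SB f -> clone set_or_top_bot (mkBF f).
Proof.
move=> Hf; case: (boolP (f (cst n false))) => Hz.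
  have -> : mkBF f = mkBF (cstf n true).
    apply: mkBF_ext => x; rewrite ffunE.
    by apply: (implyP (Hf.1 _ x _)) Hz => i; rewrite tnth_mktuple.
  by apply: clone_cst; apply: cl_base; right; left.
case: (boolP (f (cst n true))) => Hone; last first.
  have -> : mkBF f = mkBF (cstf n false).
    apply: mkBF_ext => x; rewrite ffunE; apply/negbTE; apply: contra Hone => Hx.
    by apply: (implyP (Hf.1 x _ _)) Hx => i; rewrite tnth_mktuple implybT.
  by apply: clone_cst; apply: cl_base; right; right.
set S := [seq i <- enum 'I_n.+1 | f (eb i)].
have HS := SB_any Hf Hz.
have SN : S != [::].
  by apply/eqP => E; move: Hone; rewrite HS -/S E.
case: (clone_disj (O := set_or_top_bot) (or_introl erefl) SN) => c [Hc Ec].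
have -> : mkBF f = mkBF c by apply: mkBF_ext => x; rewrite Ec HS.
exact: Hc.
Qed.

Lemma SC_clone n (f : bfun n) : SC f -> clone set_neg_bot (mkBF f).
Proof.
case=> i Hi.
have Hf : forall x, f x = f (cst n (tnth x i)) by move=> x; apply: Hi; rewrite tnth_mktuple.
have Hbot : clone set_neg_bot (mkBF (cstf n false)) by apply: clone_cst; apply: cl_base; right.
have Htop : clone set_neg_bot (mkBF (cstf n true)).
  have -> : mkBF (cstf n true) = comp_bf negf (fun _ => cstf n false).
    by apply: mkBF_ext => x; rewrite !(ffunE, tnth_mktuple).
  by apply: cl_comp => //; apply: cl_base; left.
case E0: (f (cst n false)); case E1: (f (cst n true)).
- have -> : mkBF f = mkBF (cstf n true).
    by apply: mkBF_ext => x; rewrite ffunE Hf; case: (tnth x i).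
  exact: Htop.
- have -> : mkBF f = comp_bf negf (fun _ => projf i).
    by apply: mkBF_ext => x; rewrite !(ffunE, tnth_mktuple) Hf; case: (tnth x i).
  by apply: cl_comp => //; [apply: cl_base; left|move=> _; apply: clone_proj].
- have -> : mkBF f = mkBF (projf i).
    by apply: mkBF_ext => x; rewrite ffunE Hf; case: (tnth x i).
  exact: clone_proj.
- have -> : mkBF f = mkBF (cstf n false).
    by apply: mkBF_ext => x; rewrite ffunE Hf; case: (tnth x i).
  exact: Hbot.
Qed.

Definition tern n (f : bfun n) (sigma : 'I_n.+1 -> nat) (x y z : bool) :=
  f [tuple nth false [:: x; y; z] (sigma i) | i < n.+1].

Definition goodA (t : bool -> bool -> bool -> bool) :=
  (t false false true && ~~ t false true true) ||
  (t false true true && t true false true && ~~ t false false true).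
Definition goodB (t : bool -> bool -> bool -> bool) :=
  (t false false true && ~~ t false true true) ||
  (~~ t true false false && ~~ t false true false && t true true false).
Definition dep0 (t : bool -> bool -> bool -> bool) :=
  [|| t false false false != t true false false, t false false true != t true false true,
      t false true false != t true true false | t false true true != t true true true].
Definition dep1 (t : bool -> bool -> bool -> bool) :=
  [|| t false false false != t false true false, t false false true != t false true true,
      t true false false != t true true false | t true false true != t true true true].
Definition dep2 (t : bool -> bool -> bool -> bool) :=
  [|| t false false false != t false false true, t false true false != t false true true,
      t true false false != t true false true | t true true false != t true true true].
Definition goodC (t : bool -> bool -> bool -> bool) := dep0 t && (dep1 t || dep2 t).

Lemma tern_eq n (f : bfun n) sigma x y z (a : n.+1.-tuple bool) :
  (forall i, nth false [:: x; y; z] (sigma i) = tnth a i) -> tern f sigma x y z = f a.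
Proof. by move=> H; rewrite /tern; congr (f _); apply: eq_from_tnth => i; rewrite tnth_mktuple H. Qed.

Lemma tern_ge n (f : bfun n) sigma x y z (b : n.+1.-tuple bool) : monoT f ->
  (forall i, tnth b i ==> nth false [:: x; y; z] (sigma i)) -> f b ==> tern f sigma x y z.
Proof. by move=> Hm H; apply: Hm => i; rewrite tnth_mktuple. Qed.

Lemma tern_le n (f : bfun n) sigma x y z (b : n.+1.-tuple bool) : monoT f ->
  (forall i, nth false [:: x; y; z] (sigma i) ==> tnth b i) -> tern f sigma x y z ==> f b.
Proof. by move=> Hm H; apply: Hm => i; rewrite tnth_mktuple. Qed.

Lemma notmono n (f : bfun n) : ~ monoT f ->
  exists a b : n.+1.-tuple bool, (forall i, tnth a i ==> tnth b i) /\ f a /\ ~~ f b.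
Proof.
move=> H; apply: NNPP => Hn; apply: H => a b Hab.
case Ea: (f a) => //; case Eb: (f b) => //.
by exfalso; apply: Hn; exists a, b; rewrite Ea Eb.
Qed.

Lemma sig3 n (a b : n.+1.-tuple bool) (g : bool -> bool -> nat) :
  (forall u v, (g u v < 3)%N) -> forall i, ((fun i => g (tnth a i) (tnth b i)) i < 3)%N.
Proof. by move=> H i; apply: H. Qed.

Lemma witA n (f : bfun n) : ~ SA f ->
  exists sigma : 'I_n.+1 -> nat, (forall i, (sigma i < 3)%N) /\ goodA (tern f sigma).
Proof.
move=> H; case: (classic (monoT f)) => Hm; last first.
  case: (notmono Hm) => a [b [Hab [Ha Hb]]].
  exists (fun i => if tnth a i then 2 else if tnth b i then 1 else 0); split.
    by move=> i; case: (tnth a i); case: (tnth b i).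
  apply/orP; left; rewrite (@tern_eq _ _ _ _ _ _ a) ?(@tern_eq _ _ _ _ _ _ b) ?Ha ?Hb // => i.
    by move: (Hab i); case: (tnth a i); case: (tnth b i).
  by case: (tnth a i); case: (tnth b i).
have : ~ meetT f by move=> Hmt; apply: H.
move=> Hn; have [a [b [Ha [Hb Hab]]]] : exists a b : n.+1.-tuple bool,
    f a /\ f b /\ ~~ f [tuple tnth a i && tnth b i | i < n.+1].
  apply: NNPP => Hn'; apply: Hn => a b Ha Hb; apply: negbNE; apply/negP => Hc.
  by apply: Hn'; exists a, b.
pose sg := fun i => if tnth a i && tnth b i then 2 else if tnth a i then 1 else 0.
exists sg; split; first by move=> i; rewrite /sg; case: (tnth a i); case: (tnth b i).
have H1 : f b ==> tern f sg true false true.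
  by apply: tern_ge => // i; rewrite /sg; case: (tnth a i); case: (tnth b i).
rewrite Hb /= in H1.
apply/orP; right.
rewrite (@tern_eq _ _ _ false true true a); last by move=> i; rewrite /sg; case: (tnth a i); case: (tnth b i).
rewrite (@tern_eq _ _ _ false false true [tuple tnth a i && tnth b i | i < n.+1]); last first.
  by move=> i; rewrite tnth_mktuple /sg; case: (tnth a i); case: (tnth b i).
by rewrite Ha Hab H1.
Qed.

Lemma witB n (f : bfun n) : ~ SB f ->
  exists sigma : 'I_n.+1 -> nat, (forall i, (sigma i < 3)%N) /\ goodB (tern f sigma).
Proof.
move=> H; case: (classic (monoT f)) => Hm; last first.
  case: (notmono Hm) => a [b [Hab [Ha Hb]]].
  exists (fun i => if tnth a i then 2 else if tnth b i then 1 else 0); split.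
    by move=> i; case: (tnth a i); case: (tnth b i).
  apply/orP; left; rewrite (@tern_eq _ _ _ _ _ _ a) ?(@tern_eq _ _ _ _ _ _ b) ?Ha ?Hb // => i.
    by move: (Hab i); case: (tnth a i); case: (tnth b i).
  by case: (tnth a i); case: (tnth b i).
have : ~ joinT f by move=> Hmt; apply: H.
move=> Hn; have [a [b [Ha [Hb Hab]]]] : exists a b : n.+1.-tuple bool,
    ~~ f a /\ ~~ f b /\ f [tuple tnth a i || tnth b i | i < n.+1].
  apply: NNPP => Hn'; apply: Hn => a b Ha Hb; apply/negP => Hc.
  by apply: Hn'; exists a, b.
pose sg := fun i => if tnth a i then 0 else if tnth b i then 1 else 2.
exists sg; split; first by move=> i; rewrite /sg; case: (tnth a i); case: (tnth b i).
have H1 : tern f sg false true false ==> f b.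
  by apply: tern_le => // i; rewrite /sg; case: (tnth a i); case: (tnth b i).
rewrite (negbTE Hb) /= in H1.
apply/orP; right.
rewrite (@tern_eq _ _ _ true false false a); last by move=> i; rewrite /sg; case: (tnth a i); case: (tnth b i).
rewrite (@tern_eq _ _ _ true true false [tuple tnth a i || tnth b i | i < n.+1]); last first.
  by move=> i; rewrite tnth_mktuple /sg; case: (tnth a i); case: (tnth b i).
by rewrite Ha Hab; move: H1; case: (tern f sg false true false).
Qed.

Definition flip n (a : n.+1.-tuple bool) (k : 'I_n.+1) : n.+1.-tuple bool :=
  [tuple if j == k then ~~ tnth a j else tnth a j | j < n.+1].

Lemma ess_only n (f : bfun n) (i : 'I_n.+1) :
  (forall a (k : 'I_n.+1), k != i -> f a = f (flip a k)) ->
  forall a b, tnth a i = tnth b i -> f a = f b.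
Proof.
move=> H a b Hab.
pose mix m := [tuple if (j < m)%N then tnth b j else tnth a j | j < n.+1].
have Hm : forall m, f a = f (mix m).
  elim=> [|m IH].
    by congr (f _); apply: eq_from_tnth => j; rewrite tnth_mktuple.
  rewrite IH; case: (ltnP m n.+1) => Hmn; last first.
    congr (f _); apply: eq_from_tnth => j; rewrite !tnth_mktuple.
    by rewrite !(leq_trans (ltn_ord j)) // ltnW.
  pose k := Ordinal Hmn.
  case: (boolP (tnth b k == tnth a k)) => Hk.
    congr (f _); apply: eq_from_tnth => j; rewrite !tnth_mktuple ltnS.
    case: (ltngtP j m) => // Ej.
    have -> : j = k by apply: val_inj.
    by apply/eqP; rewrite eq_sym.
  have Nki : k != i by apply: contraNneq Hk => ->; rewrite Hab.
  rewrite (H _ k Nki); congr (f _); apply: eq_from_tnth => j; rewrite !tnth_mktuple ltnS.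
  case: (ltngtP j m) => Ej.
  - have -> : (j == k) = false by apply/negbTE; apply: contraTneq Ej => ->; rewrite ltnn.
    by [].
  - have -> : (j == k) = false by apply/negbTE; apply: contraTneq Ej => ->; rewrite ltnn.
    by [].
  have -> : j = k by apply: val_inj; rewrite /= Ej.
  by rewrite eqxx; move: Hk; case: (tnth b k); case: (tnth a k).
rewrite (Hm n.+1); congr (f _); apply: eq_from_tnth => j; by rewrite tnth_mktuple ltn_ord.
Qed.

Lemma witM n (f : bfun n) (i : 'I_n.+1) a :
  f a != f (flip a i) -> f (cst n false) = f (eb i) ->
  exists sigma : 'I_n.+1 -> nat, (forall i, (sigma i < 3)%N) /\ goodC (tern f sigma).
Proof.
move=> Ha H0.
pose sg := fun k : 'I_n.+1 => if k == i then 0 else if tnth a k then 2 else 1.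
exists sg; split; first by move=> k; rewrite /sg; case: (k == i); case: (tnth a k).
have E000 : tern f sg false false false = f (cst n false).
  by apply: tern_eq => k; rewrite tnth_mktuple /sg; case: (k == i); case: (tnth a k).
have E100 : tern f sg true false false = f (eb i).
  by apply: tern_eq => k; rewrite tnth_mktuple /sg; case: (k == i); case: (tnth a k).
have Ea : tern f sg (tnth a i) false true = f a.
  apply: tern_eq => k; rewrite /sg; case: (eqVneq k i) => [->|_] //.
  by case: (tnth a k).
have Efa : tern f sg (~~ tnth a i) false true = f (flip a i).
  apply: tern_eq => k; rewrite tnth_mktuple /sg; case: (eqVneq k i) => [->|_] //.
  by case: (tnth a k).
have D : tern f sg false false true != tern f sg true false true.
  by move: Ha; rewrite -Ea -Efa; case: (tnth a i) => //; rewrite eq_sym.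
rewrite /goodC /dep0 /dep1 /dep2; move: D; rewrite -H0 -E000 in E100.
move: E100; case: (tern f sg false false false); case: (tern f sg true false false);
  case: (tern f sg false false true); case: (tern f sg true false true) => //= _ _;
  by rewrite ?orbT.
Qed.

Lemma witC n (f : bfun n) : ~ SC f ->
  exists sigma : 'I_n.+1 -> nat, (forall i, (sigma i < 3)%N) /\ goodC (tern f sigma).
Proof.
move=> H.
have [i [a Ha]] : exists i a, f a != f (flip a i).
  apply: NNPP => Hn; apply: H; exists ord0; apply: ess_only => a k _.
  apply/eqP; apply: negbNE; apply/negP => Hc; apply: Hn; by exists k, a.
have [j [a' [Nji Ha']]] : exists j a', j != i /\ f a' != f (flip a' j).
  apply: NNPP => Hn; apply: H; exists i; apply: ess_only => b k Nki.
  apply/eqP; apply: negbNE; apply/negP => Hc; apply: Hn; by exists k, b.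
case: (eqVneq (f (cst n false)) (f (eb i))) => [E1|N1]; first exact: witM Ha E1.
case: (eqVneq (f (cst n false)) (f (eb j))) => [E2|N2]; first exact: witM Ha' E2.
pose sg := fun k : 'I_n.+1 => if k == i then 0 else if k == j then 1 else 2.
exists sg; split; first by move=> k; rewrite /sg; case: (k == i); case: (k == j).
have E000 : tern f sg false false false = f (cst n false).
  by apply: tern_eq => k; rewrite tnth_mktuple /sg; case: (k == i); case: (k == j).
have E100 : tern f sg true false false = f (eb i).
  by apply: tern_eq => k; rewrite tnth_mktuple /sg; case: (k == i); case: (k == j).
have E010 : tern f sg false true false = f (eb j).
  apply: tern_eq => k; rewrite tnth_mktuple /sg; case: (eqVneq k i) => [->|_].
    by rewrite eq_sym (negbTE Nji).
  by case: (k == j).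
rewrite /goodC /dep0 /dep1 /dep2 E000 E100 E010 N1 N2 /=.
by rewrite ?orbT.
Qed.

Lemma notpre O X : ~ preceq O X ->
  exists n (f : bfun n), clone O (mkBF f) /\ ~ clone X (mkBF f).
Proof.
move=> H; apply: NNPP => Hn; apply: H => [[n f]] Hf.
apply: NNPP => Hc; apply: Hn; by exists n, f.
Qed.

Definition bitn (c k : nat) : bool := odd (iter k half c).
Definition tv (c : nat) (x y z : bool) : bool := bitn c (4 * x + 2 * y + z).
Definition code (t : bool -> bool -> bool -> bool) : nat :=
  t false false false + (t false false true + (t false true false + (t false true true +
  (t true false false + (t true false true + (t true true false + (t true true true).*2).*2).*2).*2).*2).*2).*2.

Lemma tv_code t x y z : tv (code t) x y z = t x y z.
Proof.
by case: x; case: y; case: z; rewrite /tv /bitn /code /= ?half_bit_double ?oddD ?odd_double ?oddb ?addbF.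
Qed.

Lemma code_lt t : (code t < 256)%N.
Proof.
rewrite /code -!muln2.
move: (leq_b1 (t false false false)) (leq_b1 (t false false true)) (leq_b1 (t false true false))
  (leq_b1 (t false true true)) (leq_b1 (t true false false)) (leq_b1 (t true false true))
  (leq_b1 (t true true false)) (leq_b1 (t true true true)); lia.
Qed.

Inductive tm := TV (i : nat) | TA (k : nat) (a b c : tm).

Fixpoint tm_eval (gens : seq nat) (T : tm) (x y z : bool) : bool :=
  match T with
  | TV 0 => x
  | TV 1 => y
  | TV _ => z
  | TA k a b c => tv (nth 0 gens k) (tm_eval gens a x y z) (tm_eval gens b x y z) (tm_eval gens c x y z)
  end.

Fixpoint wf (m : nat) (T : tm) : bool :=
  match T with
  | TV _ => true
  | TA k a b c => [&& (k < m)%N, wf m a, wf m b & wf m c]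
  end.

Definition eq3 (t u : bool -> bool -> bool -> bool) : bool :=
  all (fun p => t p.1.1 p.1.2 p.2 == u p.1.1 p.1.2 p.2)
    [:: (false, false, false); (false, false, true); (false, true, false); (false, true, true);
        (true, false, false); (true, false, true); (true, true, false); (true, true, true)].

Definition targets := [:: 232; 150; 224; 248].

Definition check (gens : seq nat) (T : tm) : bool :=
  wf (size gens) T && has (fun c => eq3 (tm_eval gens T) (tv c)) targets.

Lemma eval_g3 V G a b c : eval V (g3 G a b c) = eval (fun v => eval V (s3 a b c v)) G.
Proof. exact: eval_subst. Qed.

Lemma inPL_g3 O G a b c : inPL O G -> inPL O a -> inPL O b -> inPL O c -> inPL O (g3 G a b c).
Proof. by move=> HG Ha Hb Hc; apply: inPL_subst => // -[|[|v]]. Qed.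

Lemma real3_g3 O t G a b c : inPL O G -> (forall V, eval V G = t (V 0) (V 1) (V 2)) ->
  forall V, eval V (g3 G a b c) = t (eval V a) (eval V b) (eval V c).
Proof. by move=> _ HG V; rewrite eval_g3 HG. Qed.

Lemma tm_sound O gens T : (forall c, c \in gens -> real3 O (tv c)) -> wf (size gens) T ->
  real3 O (tm_eval gens T).
Proof.
move=> Hg; elim: T => [[|[|i]]|k a IHa b IHb c IHc] /=.
- by move=> _; exists (Var 0); split => //; constructor.
- by move=> _; exists (Var 1); split => //; constructor.
- by move=> _; exists (Var 2); split => //; constructor.
case/and4P => Hk Ha Hb Hc.
case: (IHa Ha) => A [HA EA]; case: (IHb Hb) => B [HB EB]; case: (IHc Hc) => C [HC EC].
case: (Hg _ (mem_nth 0 Hk)) => G [HG EG].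
exists (g3 G A B C); split; first exact: inPL_g3.
by move=> V; rewrite (real3_g3 _ _ _ HG EG) EA EB EC.
Qed.

Lemma check_sound O gens T : (forall c, c \in gens -> real3 O (tv c)) -> check gens T ->
  exists2 tg, tg \in targets & real3 O (tv tg).
Proof.
move=> Hg /andP [Hwf /hasP [tg Htg Heq]]; exists tg => //.
apply: real3_ext (tm_sound Hg Hwf) => x y z.
by move/allP: Heq => /(_ (x, y, z)); case: x; case: y; case: z => /(_ isT) /eqP.
Qed.
Definition cert1 : seq tm := [::
  (TV 0);
  (TA 0 (TA 0 (TV 0) (TV 0) (TV 0)) (TA 0 (TV 0) (TV 0) (TV 0)) (TA 0 (TV 1) (TV 1) (TV 2)));
  (TA 0 (TA 0 (TV 0) (TV 0) (TV 0)) (TA 0 (TV 1) (TV 2) (TV 0)) (TV 0));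
  (TA 0 (TA 0 (TV 0) (TV 0) (TV 0)) (TA 0 (TV 1) (TV 2) (TV 0)) (TV 0));
  (TA 0 (TA 0 (TV 0) (TV 0) (TV 0)) (TV 0) (TA 0 (TV 1) (TV 0) (TV 2)));
  (TA 0 (TA 0 (TV 0) (TV 0) (TV 0)) (TV 0) (TA 0 (TV 1) (TV 0) (TV 2)));
  (TA 0 (TA 0 (TV 0) (TV 0) (TV 1)) (TV 0) (TA 0 (TV 2) (TV 0) (TV 1)));
  (TA 0 (TA 0 (TV 0) (TV 0) (TV 0)) (TV 0) (TA 0 (TV 1) (TV 0) (TV 2)));
  (TA 0 (TA 0 (TV 1) (TV 0) (TA 0 (TV 2) (TV 0) (TV 0))) (TV 0) (TV 0));
  (TA 0 (TA 0 (TV 0) (TV 0) (TV 0)) (TA 0 (TV 0) (TV 0) (TV 0)) (TA 0 (TV 1) (TV 1) (TV 2)));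
  (TA 0 (TA 0 (TV 1) (TV 0) (TA 0 (TV 2) (TV 0) (TV 0))) (TV 0) (TV 0));
  (TA 0 (TA 0 (TV 0) (TV 0) (TV 0)) (TA 0 (TV 1) (TV 0) (TV 0)) (TV 2));
  (TA 0 (TA 0 (TV 1) (TA 0 (TV 2) (TV 0) (TV 0)) (TV 0)) (TV 0) (TV 0));
  (TA 0 (TA 0 (TV 0) (TV 0) (TV 0)) (TV 1) (TA 0 (TV 1) (TV 1) (TV 2)));
  (TA 0 (TA 0 (TV 0) (TV 1) (TV 2)) (TV 1) (TV 2));
  (TV 0);
  (TA 0 (TV 0) (TA 0 (TV 0) (TV 0) (TV 0)) (TA 0 (TV 0) (TV 1) (TV 2)));
  (TA 0 (TV 0) (TA 0 (TV 0) (TV 0) (TV 0)) (TA 0 (TV 0) (TV 1) (TV 2)));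
  (TA 0 (TV 0) (TA 0 (TV 0) (TV 0) (TV 1)) (TA 0 (TV 0) (TV 2) (TV 1)));
  (TA 0 (TV 0) (TA 0 (TV 0) (TV 0) (TV 0)) (TA 0 (TV 0) (TV 1) (TV 2)));
  (TA 0 (TV 0) (TA 0 (TV 0) (TV 0) (TV 0)) (TA 0 (TV 0) (TV 1) (TV 2)));
  (TA 0 (TV 0) (TA 0 (TV 0) (TV 0) (TV 0)) (TA 0 (TV 1) (TV 2) (TV 0)));
  (TA 0 (TV 0) (TA 0 (TV 0) (TV 1) (TV 2)) (TA 0 (TV 0) (TV 1) (TV 2)));
  (TA 0 (TV 0) (TA 0 (TV 0) (TV 0) (TV 0)) (TA 0 (TV 0) (TV 1) (TV 2)));
  (TA 0 (TV 0) (TA 0 (TV 0) (TV 0) (TV 0)) (TA 0 (TV 0) (TV 1) (TV 2)));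
  (TA 0 (TA 0 (TV 0) (TV 0) (TV 0)) (TA 0 (TV 0) (TV 0) (TV 0)) (TA 0 (TV 0) (TV 1) (TV 2)));
  (TA 0 (TV 0) (TA 0 (TV 0) (TV 0) (TV 0)) (TA 0 (TV 1) (TV 2) (TV 2)));
  (TA 0 (TA 0 (TV 0) (TV 0) (TV 0)) (TA 0 (TV 0) (TV 1) (TV 0)) (TA 0 (TV 0) (TV 2) (TV 0)));
  (TA 0 (TV 0) (TA 0 (TV 0) (TV 0) (TV 0)) (TA 0 (TV 0) (TV 1) (TV 2)));
  (TA 0 (TA 0 (TV 0) (TV 0) (TV 0)) (TV 0) (TA 0 (TV 1) (TV 2) (TV 0)));
  (TA 0 (TV 0) (TA 0 (TV 0) (TV 0) (TV 0)) (TA 0 (TV 1) (TV 2) (TV 2)));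
  (TA 0 (TA 0 (TV 0) (TV 0) (TV 0)) (TV 0) (TA 0 (TV 1) (TV 0) (TV 2)));
  (TA 0 (TV 0) (TA 0 (TV 0) (TV 1) (TA 0 (TV 0) (TV 2) (TV 0))) (TV 0));
  (TA 0 (TA 0 (TV 0) (TV 0) (TV 0)) (TA 0 (TV 0) (TV 0) (TV 0)) (TA 0 (TV 1) (TV 1) (TV 2)));
  (TA 0 (TV 0) (TA 0 (TV 0) (TV 1) (TA 0 (TV 0) (TV 2) (TV 0))) (TV 0));
  (TA 0 (TA 0 (TV 0) (TV 0) (TV 0)) (TA 0 (TV 0) (TV 1) (TV 1)) (TV 2));
  (TA 0 (TV 0) (TA 0 (TV 1) (TV 0) (TV 2)) (TV 0));
  (TA 0 (TA 0 (TV 0) (TV 0) (TV 0)) (TA 0 (TV 0) (TV 0) (TV 0)) (TA 0 (TV 1) (TV 0) (TV 2)));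
  (TA 0 (TV 0) (TA 0 (TV 1) (TV 2) (TV 1)) (TV 0));
  (TA 0 (TA 0 (TV 0) (TV 0) (TV 0)) (TA 0 (TV 0) (TV 1) (TV 0)) (TA 0 (TV 0) (TV 2) (TV 0)));
  (TA 0 (TV 1) (TA 0 (TV 0) (TV 1) (TV 2)) (TV 0));
  (TA 0 (TA 0 (TV 0) (TV 0) (TV 0)) (TA 0 (TV 0) (TV 0) (TV 0)) (TA 0 (TV 1) (TV 1) (TV 2)));
  (TA 0 (TA 0 (TV 0) (TV 1) (TV 0)) (TA 0 (TV 0) (TV 2) (TV 0)) (TV 0));
  (TA 0 (TA 0 (TV 0) (TV 0) (TV 0)) (TA 0 (TV 0) (TV 1) (TV 0)) (TV 2));
  (TA 0 (TV 0) (TA 0 (TV 1) (TV 2) (TV 1)) (TV 0));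
  (TA 0 (TA 0 (TV 0) (TV 0) (TV 0)) (TA 0 (TV 0) (TV 0) (TV 0)) (TA 0 (TV 1) (TV 1) (TV 2)));
  (TA 0 (TV 0) (TA 0 (TV 1) (TV 2) (TV 1)) (TV 0));
  (TA 0 (TA 0 (TV 0) (TV 0) (TV 0)) (TA 0 (TV 1) (TV 0) (TV 0)) (TV 2));
  (TA 0 (TV 0) (TA 0 (TA 0 (TV 0) (TV 1) (TV 0)) (TV 2) (TV 0)) (TV 0));
  (TA 0 (TV 0) (TA 0 (TV 0) (TV 0) (TV 1)) (TA 0 (TV 0) (TV 0) (TV 2)));
  (TA 0 (TV 1) (TA 0 (TV 1) (TV 0) (TV 2)) (TV 2));
  (TV 0);
  (TA 0 (TV 0) (TA 0 (TV 1) (TV 0) (TV 0)) (TA 0 (TV 0) (TV 1) (TV 2)));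
  (TA 0 (TV 0) (TA 0 (TV 0) (TV 0) (TV 0)) (TA 0 (TV 1) (TV 2) (TV 0)));
  (TA 0 (TV 0) (TA 0 (TV 0) (TV 0) (TV 1)) (TA 0 (TV 1) (TV 2) (TV 2)));
  (TA 0 (TV 0) (TA 0 (TV 0) (TV 0) (TV 0)) (TA 0 (TV 0) (TV 1) (TV 2)));
  (TA 0 (TV 0) (TA 0 (TV 1) (TV 0) (TV 1)) (TV 2));
  (TA 0 (TV 0) (TA 0 (TV 1) (TV 2) (TV 0)) (TV 1));
  (TA 0 (TV 0) (TA 0 (TV 1) (TV 2) (TV 2)) (TA 0 (TV 1) (TV 2) (TV 2)));
  (TA 0 (TA 0 (TV 0) (TV 0) (TV 0)) (TA 0 (TV 0) (TV 1) (TV 1)) (TV 2));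
  (TA 0 (TV 0) (TA 0 (TV 1) (TV 2) (TV 0)) (TV 0));
  (TA 0 (TA 0 (TV 0) (TV 0) (TV 0)) (TA 0 (TV 0) (TV 0) (TV 0)) (TA 0 (TV 1) (TV 1) (TV 2)));
  (TA 0 (TV 0) (TA 0 (TV 1) (TV 2) (TV 1)) (TV 0));
  (TA 0 (TA 0 (TV 0) (TV 0) (TV 0)) (TA 0 (TV 1) (TV 2) (TV 0)) (TV 0));
  (TA 0 (TV 0) (TV 0) (TA 0 (TV 0) (TA 0 (TV 0) (TV 0) (TV 1)) (TV 2)));
  (TA 0 (TA 0 (TV 0) (TV 0) (TV 0)) (TA 0 (TV 1) (TV 2) (TV 0)) (TA 0 (TV 0) (TV 1) (TV 0)));
  (TA 0 (TV 0) (TV 0) (TA 0 (TV 1) (TV 1) (TV 2)));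
  (TA 0 (TA 0 (TV 0) (TV 0) (TV 0)) (TA 0 (TV 0) (TV 0) (TV 0)) (TA 0 (TV 1) (TV 1) (TV 2)));
  (TA 0 (TV 0) (TV 0) (TA 0 (TV 0) (TA 0 (TV 0) (TV 0) (TV 1)) (TV 2)));
  (TA 0 (TA 0 (TV 0) (TV 0) (TV 0)) (TV 0) (TA 0 (TV 1) (TV 2) (TV 2)));
  (TA 0 (TV 0) (TV 0) (TA 0 (TV 1) (TV 1) (TV 2)));
  (TA 0 (TA 0 (TV 0) (TV 0) (TV 0)) (TV 0) (TA 0 (TV 1) (TV 2) (TV 0)));
  (TA 0 (TV 1) (TV 0) (TA 0 (TV 0) (TV 2) (TV 1)));
  (TA 0 (TA 0 (TV 0) (TV 0) (TV 0)) (TA 0 (TV 0) (TV 1) (TV 2)) (TA 0 (TV 0) (TV 0) (TV 2)));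
  (TA 0 (TV 0) (TV 0) (TA 0 (TV 1) (TV 1) (TV 2)));
  (TA 0 (TA 0 (TV 0) (TV 0) (TV 0)) (TA 0 (TV 0) (TV 0) (TV 0)) (TA 0 (TV 1) (TV 1) (TV 2)));
  (TA 0 (TA 0 (TV 0) (TV 0) (TV 1)) (TV 0) (TA 0 (TV 0) (TV 0) (TV 2)));
  (TA 0 (TA 0 (TV 0) (TV 0) (TV 0)) (TV 1) (TA 0 (TV 0) (TV 0) (TV 2)));
  (TA 0 (TV 0) (TV 0) (TA 0 (TV 1) (TV 1) (TV 2)));
  (TA 0 (TA 0 (TV 0) (TV 0) (TV 0)) (TV 1) (TA 0 (TV 1) (TV 1) (TV 2)));
  (TA 0 (TV 0) (TV 0) (TA 0 (TA 0 (TV 0) (TV 0) (TV 1)) (TV 0) (TV 2)));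
  (TA 0 (TV 0) (TA 0 (TV 0) (TV 0) (TV 0)) (TA 0 (TV 1) (TV 2) (TV 1)));
  (TA 0 (TV 0) (TV 0) (TA 0 (TV 1) (TV 1) (TV 2)));
  (TA 0 (TV 0) (TA 0 (TV 0) (TV 0) (TV 0)) (TA 0 (TV 1) (TV 2) (TV 0)));
  (TA 0 (TV 1) (TV 2) (TA 0 (TV 1) (TV 2) (TV 0)));
  (TV 0);
  (TA 0 (TV 0) (TV 0) (TA 0 (TV 1) (TV 1) (TV 2)));
  (TA 0 (TV 0) (TA 0 (TV 0) (TV 0) (TV 0)) (TA 0 (TV 1) (TV 2) (TV 0)));
  (TA 0 (TV 0) (TV 1) (TA 0 (TV 2) (TV 2) (TV 0)));
  (TA 0 (TV 0) (TV 1) (TA 0 (TV 1) (TV 0) (TV 2)));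
  (TA 0 (TV 0) (TV 0) (TA 0 (TV 1) (TV 0) (TV 2)));
  (TA 0 (TA 0 (TV 0) (TV 0) (TV 0)) (TA 0 (TV 0) (TV 0) (TV 0)) (TA 0 (TV 1) (TV 0) (TV 2)));
  (TA 0 (TV 0) (TA 0 (TV 1) (TV 2) (TV 2)) (TA 0 (TV 1) (TV 2) (TV 2)));
  (TA 0 (TA 0 (TV 0) (TV 0) (TV 0)) (TV 0) (TA 0 (TV 1) (TV 2) (TV 2)));
  (TA 0 (TV 0) (TV 0) (TA 0 (TV 1) (TV 1) (TV 2)));
  (TA 0 (TA 0 (TV 0) (TV 0) (TV 0)) (TV 0) (TA 0 (TV 1) (TV 0) (TV 2)));
  (TA 0 (TV 0) (TV 1) (TA 0 (TV 2) (TV 0) (TV 1)));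
  (TA 0 (TA 0 (TV 0) (TV 0) (TV 0)) (TA 0 (TV 1) (TV 2) (TV 2)) (TA 0 (TV 1) (TV 2) (TV 2)));
  (TA 0 (TV 0) (TV 0) (TA 0 (TV 1) (TV 1) (TV 2)));
  (TA 0 (TV 0) (TA 0 (TV 1) (TV 2) (TV 0)) (TV 1));
  (TA 0 (TV 0) (TV 1) (TA 0 (TV 2) (TV 1) (TV 0)));
  (TA 0 (TV 0) (TV 1) (TA 0 (TV 1) (TV 0) (TV 2)));
  (TA 0 (TV 0) (TV 0) (TA 0 (TV 0) (TV 1) (TV 2)));
  (TA 0 (TA 0 (TV 0) (TV 0) (TV 0)) (TA 0 (TV 0) (TV 0) (TV 0)) (TA 0 (TV 0) (TV 1) (TV 2)));
  (TA 0 (TV 0) (TV 1) (TA 0 (TV 1) (TV 2) (TV 2)));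
  (TA 0 (TV 0) (TV 0) (TA 0 (TV 0) (TV 1) (TV 2)));
  (TA 0 (TV 0) (TV 0) (TA 0 (TV 1) (TV 1) (TV 2)));
  (TA 0 (TA 0 (TV 0) (TV 0) (TV 0)) (TA 0 (TV 0) (TV 0) (TV 0)) (TA 0 (TV 1) (TV 1) (TV 2)));
  (TA 0 (TV 0) (TA 0 (TV 1) (TV 2) (TV 1)) (TV 0));
  (TA 0 (TA 0 (TV 0) (TV 0) (TV 0)) (TA 0 (TV 0) (TV 1) (TV 2)) (TA 0 (TV 0) (TV 0) (TV 2)));
  (TA 0 (TV 0) (TV 0) (TA 0 (TV 1) (TV 1) (TV 2)));
  (TA 0 (TA 0 (TV 0) (TV 0) (TV 0)) (TA 0 (TV 0) (TV 0) (TV 0)) (TA 0 (TV 1) (TV 1) (TV 2)));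
  (TA 0 (TV 0) (TA 0 (TV 0) (TV 0) (TV 1)) (TA 0 (TV 0) (TV 0) (TV 2)));
  (TA 0 (TV 0) (TA 0 (TV 0) (TV 0) (TV 1)) (TA 0 (TV 0) (TV 0) (TV 2)));
  (TA 0 (TV 0) (TV 0) (TA 0 (TV 1) (TV 1) (TV 2)));
  (TA 0 (TV 0) (TA 0 (TV 0) (TV 0) (TV 1)) (TA 0 (TV 0) (TV 0) (TV 2)));
  (TA 0 (TV 0) (TA 0 (TV 0) (TV 0) (TV 1)) (TA 0 (TV 0) (TV 0) (TV 2)));
  (TA 0 (TV 0) (TA 0 (TV 0) (TV 0) (TV 0)) (TA 0 (TV 1) (TV 2) (TV 1)));
  (TA 0 (TV 0) (TV 0) (TA 0 (TV 1) (TV 1) (TV 2)));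
  (TA 0 (TV 0) (TA 0 (TV 0) (TV 0) (TV 0)) (TA 0 (TV 0) (TV 1) (TV 2)));
  (TA 0 (TV 0) (TV 1) (TA 0 (TV 2) (TV 0) (TV 2)));
  (TA 0 (TA 0 (TV 0) (TV 0) (TV 0)) (TA 0 (TV 1) (TV 2) (TV 2)) (TA 0 (TV 1) (TV 2) (TV 2)));
  (TA 0 (TV 0) (TV 0) (TA 0 (TV 1) (TV 1) (TV 2)));
  (TA 0 (TA 0 (TV 0) (TV 0) (TV 0)) (TA 0 (TV 0) (TV 0) (TV 0)) (TA 0 (TV 1) (TV 1) (TV 2)));
  (TA 0 (TV 0) (TA 0 (TV 0) (TV 0) (TV 1)) (TA 0 (TV 0) (TV 0) (TV 2)));
  (TA 0 (TA 0 (TV 0) (TV 0) (TV 0)) (TA 0 (TV 1) (TV 2) (TV 0)) (TA 0 (TV 0) (TV 1) (TV 0)));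
  (TA 0 (TV 0) (TV 0) (TA 0 (TV 1) (TV 1) (TV 2)));
  (TA 0 (TA 0 (TV 0) (TV 0) (TV 0)) (TA 0 (TV 0) (TV 0) (TV 0)) (TA 0 (TV 1) (TV 1) (TV 2)));
  (TV 0);
  (TA 0 (TV 0) (TV 0) (TA 0 (TV 1) (TV 1) (TV 2)));
  (TA 0 (TA 0 (TV 0) (TV 1) (TV 2)) (TA 0 (TV 1) (TV 2) (TV 0)) (TV 0));
  (TA 0 (TV 0) (TA 0 (TV 1) (TV 2) (TV 1)) (TV 0));
  (TA 0 (TA 0 (TV 0) (TV 1) (TV 2)) (TV 0) (TA 0 (TV 1) (TV 0) (TV 2)));
  (TA 0 (TV 0) (TV 0) (TA 0 (TV 1) (TV 1) (TV 2)));
  (TA 0 (TV 0) (TA 0 (TV 1) (TV 0) (TV 2)) (TA 0 (TV 2) (TV 0) (TV 1)));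
  (TA 0 (TV 0) (TA 0 (TV 0) (TV 0) (TV 0)) (TA 0 (TV 1) (TV 2) (TV 2)));
  (TV 0);
  (TA 0 (TV 0) (TV 0) (TA 0 (TV 1) (TV 1) (TV 2)));
  (TA 0 (TA 0 (TV 1) (TV 2) (TV 0)) (TV 2) (TV 0));
  (TA 0 (TV 0) (TA 0 (TV 1) (TV 2) (TV 1)) (TV 0));
  (TA 0 (TA 0 (TV 1) (TV 0) (TV 2)) (TV 0) (TV 2));
  (TA 0 (TV 0) (TV 0) (TA 0 (TV 1) (TV 1) (TV 2)));
  (TA 0 (TV 0) (TA 0 (TV 1) (TV 0) (TV 2)) (TA 0 (TV 2) (TV 0) (TV 1)));
  (TA 0 (TA 0 (TV 0) (TV 1) (TV 2)) (TV 1) (TV 2));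
  (TA 0 (TV 0) (TA 0 (TV 0) (TV 1) (TV 2)) (TA 0 (TV 1) (TV 0) (TV 2)));
  (TA 0 (TV 0) (TV 0) (TA 0 (TV 1) (TV 1) (TV 2)));
  (TA 0 (TV 0) (TA 0 (TV 0) (TV 1) (TV 2)) (TA 0 (TV 1) (TV 2) (TV 1)));
  (TA 0 (TV 0) (TA 0 (TV 0) (TV 0) (TV 1)) (TA 0 (TV 1) (TV 2) (TV 2)));
  (TA 0 (TV 0) (TA 0 (TV 0) (TV 1) (TV 2)) (TA 0 (TV 1) (TV 2) (TV 0)));
  (TA 0 (TV 0) (TV 0) (TA 0 (TV 1) (TV 1) (TV 2)));
  (TA 0 (TV 0) (TV 1) (TV 2));
  (TA 0 (TV 0) (TA 0 (TV 0) (TV 1) (TV 2)) (TA 0 (TV 0) (TV 1) (TV 2)));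
  (TA 0 (TV 0) (TV 0) (TA 0 (TV 1) (TV 2) (TV 2)));
  (TA 0 (TV 0) (TV 0) (TA 0 (TV 0) (TV 1) (TV 2)));
  (TA 0 (TV 0) (TV 1) (TA 0 (TV 1) (TV 0) (TV 2)));
  (TA 0 (TV 0) (TA 0 (TV 1) (TV 2) (TV 1)) (TV 0));
  (TA 0 (TV 0) (TV 0) (TA 0 (TV 1) (TV 2) (TV 2)));
  (TA 0 (TV 0) (TV 0) (TA 0 (TV 1) (TV 1) (TV 2)));
  (TA 0 (TV 0) (TA 0 (TV 1) (TV 0) (TV 2)) (TA 0 (TV 2) (TV 0) (TV 1)));
  (TA 0 (TA 0 (TV 0) (TV 0) (TV 1)) (TV 0) (TA 0 (TV 2) (TV 0) (TV 1)));
  (TV 0);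
  (TA 0 (TV 0) (TV 0) (TA 0 (TV 1) (TV 1) (TV 2)));
  (TA 0 (TV 1) (TA 0 (TV 1) (TV 2) (TV 0)) (TV 0));
  (TA 0 (TV 0) (TA 0 (TV 1) (TV 2) (TV 2)) (TA 0 (TV 1) (TV 2) (TV 2)));
  (TA 0 (TV 0) (TV 0) (TA 0 (TV 1) (TV 2) (TV 1)));
  (TA 0 (TV 0) (TV 0) (TA 0 (TV 1) (TV 0) (TV 2)));
  (TA 0 (TV 0) (TV 1) (TA 0 (TV 1) (TV 0) (TV 2)));
  (TA 0 (TV 0) (TA 0 (TV 0) (TV 0) (TV 0)) (TA 0 (TV 1) (TV 2) (TV 2)));
  (TA 0 (TV 1) (TV 2) (TV 0));
  (TA 0 (TV 0) (TV 0) (TA 0 (TV 1) (TV 1) (TV 2)));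
  (TV 0);
  (TA 0 (TA 0 (TV 0) (TV 1) (TV 0)) (TA 0 (TV 0) (TV 2) (TV 0)) (TV 0));
  (TA 0 (TV 0) (TV 0) (TA 0 (TV 1) (TV 2) (TV 0)));
  (TA 0 (TV 0) (TV 0) (TA 0 (TV 1) (TV 1) (TV 2)));
  (TA 0 (TA 0 (TV 1) (TV 2) (TV 0)) (TV 2) (TV 0));
  (TA 0 (TA 0 (TV 1) (TV 0) (TA 0 (TV 2) (TV 0) (TV 0))) (TV 0) (TV 0));
  (TA 0 (TV 0) (TA 0 (TV 0) (TV 1) (TV 2)) (TV 2));
  (TA 0 (TV 0) (TV 0) (TA 0 (TV 1) (TV 1) (TV 2)));
  (TA 0 (TV 0) (TA 0 (TV 0) (TV 1) (TV 2)) (TV 2));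
  (TA 0 (TV 1) (TA 0 (TV 1) (TV 0) (TV 2)) (TV 2));
  (TA 0 (TV 0) (TV 0) (TA 0 (TV 1) (TV 2) (TV 1)));
  (TA 0 (TV 0) (TV 0) (TA 0 (TV 1) (TV 1) (TV 2)));
  (TA 0 (TV 0) (TA 0 (TV 0) (TV 1) (TV 2)) (TA 0 (TV 1) (TV 2) (TV 1)));
  (TA 0 (TV 0) (TA 0 (TV 0) (TV 0) (TV 1)) (TA 0 (TV 0) (TV 2) (TV 1)));
  (TA 0 (TV 0) (TV 0) (TA 0 (TV 1) (TV 2) (TV 0)));
  (TA 0 (TV 0) (TV 0) (TA 0 (TV 1) (TV 1) (TV 2)));
  (TA 0 (TV 1) (TA 0 (TV 1) (TV 2) (TV 0)) (TV 0));
  (TA 0 (TV 0) (TA 0 (TV 0) (TV 1) (TA 0 (TV 0) (TV 2) (TV 0))) (TV 0));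
  (TA 0 (TV 0) (TV 0) (TA 0 (TV 1) (TV 2) (TV 0)));
  (TA 0 (TV 0) (TV 0) (TA 0 (TV 1) (TV 1) (TV 2)));
  (TA 0 (TA 0 (TV 0) (TV 1) (TV 2)) (TA 0 (TV 1) (TV 2) (TV 0)) (TV 0));
  (TA 0 (TA 0 (TV 0) (TV 0) (TV 0)) (TA 0 (TV 1) (TV 2) (TV 0)) (TV 0));
  (TV 0);
  (TA 0 (TV 0) (TA 0 (TV 0) (TV 0) (TV 1)) (TA 0 (TV 0) (TV 0) (TV 2)));
  (TA 0 (TV 0) (TV 0) (TA 0 (TV 1) (TV 2) (TV 0)));
  (TA 0 (TV 0) (TA 0 (TV 1) (TV 2) (TV 0)) (TV 0));
  (TA 0 (TV 1) (TV 0) (TA 0 (TV 1) (TV 0) (TV 2)));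
  (TA 0 (TV 0) (TA 0 (TV 1) (TV 2) (TV 2)) (TA 0 (TV 1) (TV 2) (TV 2)));
  (TA 0 (TV 0) (TV 0) (TA 0 (TV 1) (TV 2) (TV 2)));
  (TA 0 (TV 0) (TA 0 (TV 0) (TV 0) (TV 0)) (TA 0 (TV 0) (TV 1) (TV 2)));
  (TA 0 (TV 1) (TV 0) (TV 2));
  (TA 0 (TV 0) (TA 0 (TV 1) (TV 2) (TV 1)) (TV 0));
  (TA 0 (TV 0) (TV 0) (TA 0 (TV 1) (TV 2) (TV 0)));
  (TA 0 (TV 0) (TA 0 (TV 1) (TV 2) (TV 1)) (TV 0));
  (TV 0);
  (TA 0 (TA 0 (TV 0) (TV 0) (TV 1)) (TV 0) (TA 0 (TV 0) (TV 0) (TV 2)));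
  (TA 0 (TA 0 (TV 1) (TV 0) (TV 2)) (TV 0) (TV 2));
  (TA 0 (TA 0 (TV 1) (TA 0 (TV 2) (TV 0) (TV 0)) (TV 0)) (TV 0) (TV 0));
  (TA 0 (TV 0) (TV 1) (TA 0 (TV 0) (TV 1) (TV 2)));
  (TA 0 (TV 0) (TA 0 (TV 0) (TV 0) (TV 1)) (TA 0 (TV 0) (TV 0) (TV 2)));
  (TA 0 (TV 0) (TV 0) (TA 0 (TV 1) (TV 2) (TV 1)));
  (TA 0 (TV 0) (TA 0 (TV 1) (TV 0) (TV 0)) (TA 0 (TV 0) (TV 1) (TV 2)));
  (TA 0 (TV 0) (TV 1) (TA 0 (TV 0) (TV 1) (TV 2)));
  (TA 0 (TV 1) (TV 2) (TA 0 (TV 1) (TV 2) (TV 0)));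
  (TA 0 (TV 0) (TA 0 (TV 0) (TV 1) (TV 2)) (TA 0 (TV 1) (TV 2) (TV 0)));
  (TA 0 (TV 0) (TA 0 (TV 0) (TV 0) (TV 0)) (TA 0 (TV 0) (TV 1) (TV 2)));
  (TA 0 (TV 0) (TV 1) (TA 0 (TV 0) (TV 1) (TV 2)));
  (TA 0 (TV 0) (TV 1) (TA 0 (TV 2) (TV 1) (TV 0)));
  (TA 0 (TV 0) (TV 0) (TA 0 (TV 1) (TV 2) (TV 1)));
  (TA 0 (TV 0) (TA 0 (TV 1) (TV 0) (TV 2)) (TV 0));
  (TA 0 (TV 1) (TV 0) (TA 0 (TV 1) (TV 0) (TV 2)));
  (TA 0 (TV 0) (TV 0) (TA 0 (TV 0) (TA 0 (TV 0) (TV 0) (TV 1)) (TV 2)));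
  (TA 0 (TA 0 (TV 0) (TV 1) (TV 2)) (TV 0) (TA 0 (TV 1) (TV 0) (TV 2)));
  (TA 0 (TA 0 (TV 0) (TV 0) (TV 0)) (TV 0) (TA 0 (TV 1) (TV 0) (TV 2)));
  (TA 0 (TV 0) (TV 1) (TV 2));
  (TA 0 (TV 0) (TV 1) (TA 0 (TV 2) (TV 0) (TV 2)));
  (TA 0 (TV 0) (TV 0) (TA 0 (TV 1) (TV 2) (TV 0)));
  (TA 0 (TV 0) (TA 0 (TV 1) (TV 0) (TV 1)) (TV 2));
  (TA 0 (TV 0) (TV 1) (TA 0 (TV 0) (TV 1) (TV 2)));
  (TA 0 (TV 0) (TV 1) (TA 0 (TV 2) (TV 2) (TV 0)));
  (TA 0 (TV 0) (TV 0) (TA 0 (TV 1) (TV 2) (TV 2)));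
  (TA 0 (TV 0) (TA 0 (TV 0) (TV 0) (TV 0)) (TA 0 (TV 0) (TV 1) (TV 2)));
  (TA 0 (TV 0) (TV 1) (TV 2));
  (TA 0 (TV 0) (TV 1) (TA 0 (TV 1) (TV 2) (TV 2)));
  (TA 0 (TV 1) (TV 2) (TV 0));
  (TA 0 (TV 1) (TA 0 (TV 0) (TV 1) (TV 2)) (TV 0));
  (TA 0 (TV 1) (TV 0) (TV 2));
  (TA 0 (TV 1) (TV 0) (TA 0 (TV 0) (TV 2) (TV 1)));
  (TV 0);
  (TA 0 (TA 0 (TV 1) (TV 0) (TA 0 (TV 2) (TV 0) (TV 0))) (TV 0) (TV 0));
  (TV 0);
  (TA 0 (TV 0) (TA 0 (TV 0) (TV 0) (TV 1)) (TA 0 (TV 0) (TV 0) (TV 2)));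
  (TA 0 (TV 0) (TA 0 (TV 0) (TV 1) (TV 2)) (TV 2));
  (TA 0 (TV 0) (TA 0 (TA 0 (TV 0) (TV 1) (TV 0)) (TV 2) (TV 0)) (TV 0));
  (TA 0 (TV 0) (TV 1) (TA 0 (TV 0) (TV 1) (TV 2)));
  (TA 0 (TV 0) (TV 0) (TA 0 (TA 0 (TV 0) (TV 0) (TV 1)) (TV 0) (TV 2)));
  (TA 0 (TV 0) (TA 0 (TV 0) (TV 1) (TV 2)) (TA 0 (TV 1) (TV 0) (TV 2)));
  (TA 0 (TV 0) (TA 0 (TV 0) (TV 0) (TV 0)) (TA 0 (TV 0) (TV 1) (TV 2)));
  (TA 0 (TV 0) (TV 1) (TV 2));
  (TA 0 (TV 0) (TV 1) (TA 0 (TV 2) (TV 0) (TV 1)));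
  (TV 0);
  (TA 0 (TV 0) (TA 0 (TV 0) (TV 1) (TA 0 (TV 0) (TV 2) (TV 0))) (TV 0));
  (TV 0);
  (TA 0 (TV 0) (TV 0) (TA 0 (TV 0) (TA 0 (TV 0) (TV 0) (TV 1)) (TV 2)));
  (TV 0);
  (TV 0)].
Definition cert3 : seq (nat * nat * nat * tm) := [::
  (51, 51, 128, (TA 0 (TV 0) (TA 2 (TA 0 (TV 0) (TV 0) (TV 0)) (TA 0 (TV 0) (TV 0) (TV 0)) (TA 0 (TV 0) (TA 2 (TV 1) (TV 1) (TV 2)) (TV 0))) (TV 0)));
  (51, 51, 136, (TA 0 (TV 0) (TA 2 (TV 0) (TA 0 (TV 0) (TV 0) (TV 0)) (TA 0 (TV 0) (TA 2 (TV 0) (TV 1) (TV 2)) (TV 0))) (TV 0)));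
  (51, 51, 160, (TA 0 (TV 0) (TA 2 (TA 0 (TV 0) (TV 0) (TV 0)) (TV 0) (TA 0 (TV 0) (TA 2 (TV 1) (TV 0) (TV 2)) (TV 0))) (TV 0)));
  (51, 51, 192, (TA 0 (TV 0) (TA 2 (TA 0 (TV 0) (TV 0) (TV 0)) (TA 0 (TV 0) (TA 2 (TV 1) (TV 2) (TV 0)) (TV 0)) (TV 0)) (TV 0)));
  (51, 51, 238, (TA 0 (TV 0) (TA 2 (TV 0) (TA 0 (TV 0) (TV 0) (TV 0)) (TA 0 (TV 0) (TA 2 (TV 0) (TV 1) (TV 2)) (TV 0))) (TV 0)));
  (51, 51, 250, (TA 0 (TV 0) (TA 2 (TA 0 (TV 0) (TV 0) (TV 0)) (TV 0) (TA 0 (TV 0) (TA 2 (TV 1) (TV 0) (TV 2)) (TV 0))) (TV 0)));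
  (51, 51, 252, (TA 0 (TV 0) (TA 2 (TA 0 (TV 0) (TV 0) (TV 0)) (TA 0 (TV 0) (TA 2 (TV 1) (TV 2) (TV 0)) (TV 0)) (TV 0)) (TV 0)));
  (51, 51, 254, (TA 0 (TV 0) (TA 2 (TA 0 (TV 0) (TV 0) (TV 0)) (TA 0 (TV 0) (TV 0) (TV 0)) (TA 0 (TV 0) (TA 2 (TV 1) (TV 1) (TV 2)) (TV 0))) (TV 0)));
  (51, 192, 128, (TA 0 (TV 0) (TA 1 (TA 0 (TV 0) (TV 0) (TV 0)) (TA 0 (TV 0) (TA 1 (TV 1) (TV 2) (TV 0)) (TV 0)) (TV 0)) (TV 0)));
  (51, 192, 136, (TA 0 (TV 0) (TA 1 (TA 0 (TV 0) (TV 0) (TV 0)) (TA 0 (TV 0) (TA 1 (TV 1) (TV 2) (TV 0)) (TV 0)) (TV 0)) (TV 0)));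
  (51, 192, 160, (TA 0 (TV 0) (TA 1 (TA 0 (TV 0) (TV 0) (TV 0)) (TA 0 (TV 0) (TA 1 (TV 1) (TV 2) (TV 0)) (TV 0)) (TV 0)) (TV 0)));
  (51, 192, 192, (TA 0 (TV 0) (TA 1 (TA 0 (TV 0) (TV 0) (TV 0)) (TA 0 (TV 0) (TA 1 (TV 1) (TV 2) (TV 0)) (TV 0)) (TV 0)) (TV 0)));
  (51, 192, 238, (TA 1 (TV 0) (TA 2 (TV 0) (TV 1) (TV 2)) (TV 0)));
  (51, 192, 250, (TA 1 (TV 0) (TA 2 (TV 1) (TV 0) (TV 2)) (TV 0)));
  (51, 192, 252, (TA 1 (TV 0) (TA 2 (TV 1) (TV 2) (TV 0)) (TV 0)));
  (51, 192, 254, (TA 1 (TV 0) (TA 2 (TV 1) (TV 1) (TV 2)) (TV 0)));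
  (252, 51, 128, (TA 0 (TV 0) (TA 2 (TV 1) (TV 1) (TV 2)) (TV 0)));
  (252, 51, 136, (TA 0 (TV 0) (TA 2 (TV 0) (TV 1) (TV 2)) (TV 0)));
  (252, 51, 160, (TA 0 (TV 0) (TA 2 (TV 1) (TV 0) (TV 2)) (TV 0)));
  (252, 51, 192, (TA 0 (TV 0) (TA 2 (TV 1) (TV 2) (TV 0)) (TV 0)));
  (252, 51, 238, (TA 0 (TV 0) (TA 1 (TV 0) (TA 0 (TA 1 (TV 0) (TV 1) (TV 0)) (TA 1 (TV 0) (TV 2) (TV 0)) (TV 0)) (TV 0)) (TV 0)));
  (252, 51, 250, (TA 0 (TV 0) (TA 1 (TV 0) (TA 0 (TA 1 (TV 0) (TV 1) (TV 0)) (TA 1 (TV 0) (TV 2) (TV 0)) (TV 0)) (TV 0)) (TV 0)));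
  (252, 51, 252, (TA 0 (TV 0) (TA 1 (TV 0) (TA 0 (TA 1 (TV 0) (TV 1) (TV 0)) (TA 1 (TV 0) (TV 2) (TV 0)) (TV 0)) (TV 0)) (TV 0)));
  (252, 51, 254, (TA 0 (TV 0) (TA 1 (TV 0) (TA 0 (TA 1 (TV 0) (TV 1) (TV 0)) (TA 1 (TV 0) (TV 2) (TV 0)) (TV 0)) (TV 0)) (TV 0)));
  (252, 192, 128, (TA 0 (TV 0) (TA 1 (TV 1) (TV 2) (TV 0)) (TV 0)));
  (252, 192, 136, (TA 0 (TV 0) (TA 1 (TV 1) (TV 2) (TV 0)) (TV 0)));
  (252, 192, 160, (TA 0 (TV 0) (TA 1 (TV 1) (TV 2) (TV 0)) (TV 0)));
  (252, 192, 192, (TA 0 (TV 0) (TA 1 (TV 1) (TV 2) (TV 0)) (TV 0)));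
  (252, 192, 238, (TA 0 (TV 0) (TA 1 (TV 1) (TV 2) (TV 0)) (TV 0)));
  (252, 192, 250, (TA 0 (TV 0) (TA 1 (TV 1) (TV 2) (TV 0)) (TV 0)));
  (252, 192, 252, (TA 0 (TV 0) (TA 1 (TV 1) (TV 2) (TV 0)) (TV 0)));
  (252, 192, 254, (TA 0 (TV 0) (TA 1 (TV 1) (TV 2) (TV 0)) (TV 0)))].

Definition ok1 (c : nat) : bool := check [:: c] (nth (TV 0) cert1 c).
Definition lookup3 (a b c : nat) : tm :=
  (nth (0, 0, 0, TV 0) cert3 (find (fun e => (e.1.1.1 == a) && (e.1.1.2 == b) && (e.1.2 == c)) cert3)).2.
Definition ok3 (a b c : nat) : bool := check [:: a; b; c] (lookup3 a b c).

Definition bigcheck : bool :=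
  all (fun a => if goodA (tv a) then (if ok1 a then true else
     all (fun b => if goodB (tv b) then (if ok1 b then true else
        all (fun c => if goodC (tv c) then (if ok1 c then true else ok3 a b c) else true) (iota 0 256))
      else true) (iota 0 256)) else true) (iota 0 256).

Lemma bigcheck_ok : bigcheck = true.
Proof. vm_compute. reflexivity. Qed.

Lemma tri O a b c : (a < 256)%N -> (b < 256)%N -> (c < 256)%N ->
  goodA (tv a) -> goodB (tv b) -> goodC (tv c) ->
  real3 O (tv a) -> real3 O (tv b) -> real3 O (tv c) ->
  exists2 tg, tg \in targets & real3 O (tv tg).
Proof.
move=> Ha Hb Hc GA GB GC Ra Rb Rc.
have := bigcheck_ok; rewrite /bigcheck => /allP /(_ a); rewrite mem_iota Ha GA => /(_ isT).
case: ifP => [H1 _|_ /allP /(_ b)].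
  by apply: (check_sound (gens := [:: a])) H1 => x; rewrite inE => /eqP ->.
rewrite mem_iota Hb GB => /(_ isT).
case: ifP => [H1 _|_ /allP /(_ c)].
  by apply: (check_sound (gens := [:: b])) H1 => x; rewrite inE => /eqP ->.
rewrite mem_iota Hc GC => /(_ isT).
case: ifP => [H1 _|_ H1].
  by apply: (check_sound (gens := [:: c])) H1 => x; rewrite inE => /eqP ->.
apply: (check_sound (gens := [:: a; b; c])) H1 => x; rewrite !inE.
by case/orP => [/eqP ->|/orP [/eqP ->|/eqP ->]].
Qed.

Lemma goodA_ext t t' : (forall x y z, t x y z = t' x y z) -> goodA t = goodA t'.
Proof. by move=> H; rewrite /goodA !H. Qed.
Lemma goodB_ext t t' : (forall x y z, t x y z = t' x y z) -> goodB t = goodB t'.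
Proof. by move=> H; rewrite /goodB !H. Qed.
Lemma goodC_ext t t' : (forall x y z, t x y z = t' x y z) -> goodC t = goodC t'.
Proof. by move=> H; rewrite /goodC /dep0 /dep1 /dep2 !H. Qed.

Lemma target_real O :
  ~ (preceq O set_and_top_bot \/ preceq O set_or_top_bot \/ preceq O set_neg_bot) ->
  exists2 tg, tg \in targets & real3 O (tv tg).
Proof.
move=> H.
have [nA [fA [CA NA]]] := notpre (fun h => H (or_introl h)).
have [nB [fB [CB NB]]] := notpre (fun h => H (or_intror (or_introl h))).
have [nC [fC [CC NC]]] := notpre (fun h => H (or_intror (or_intror h))).
have [sA [HsA GA]] := witA (fun h => NA (SA_clone h)).
have [sB [HsB GB]] := witB (fun h => NB (SB_clone h)).
have [sC [HsC GC]] := witC (fun h => NC (SC_clone h)).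
have RA := real_minor (clone_real CA) HsA.
have RB := real_minor (clone_real CB) HsB.
have RC := real_minor (clone_real CC) HsC.
apply: (tri (a := code (tern fA sA)) (b := code (tern fB sB)) (c := code (tern fC sC))).
- exact: code_lt.
- exact: code_lt.
- exact: code_lt.
- by rewrite (goodA_ext (tv_code _)).
- by rewrite (goodB_ext (tv_code _)).
- by rewrite (goodC_ext (tv_code _)).
- by apply: real3_ext RA => x y z; rewrite tv_code.
- by apply: real3_ext RB => x y z; rewrite tv_code.
- by apply: real3_ext RC => x y z; rewrite tv_code.
Qed.

Import Order.TTheory GRing.Theory Num.Theory.

Lemma leq_expr m n e : (m <= n)%N -> (m ^ e <= n ^ e)%N.
Proof. by move=> H; elim: e => // e IH; rewrite !expnS leq_mul. Qed.

Lemma sq_le_exp m : (4 <= m)%N -> (m * m <= 2 ^ m)%N.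
Proof.
elim: m => // m IH; rewrite leq_eqVlt => /orP [/eqP <-|H] //.
have := IH H; rewrite expnS => H1.
apply: leq_trans (_ : (m * m).*2 <= _)%N; last by rewrite -mul2n leq_mul2l.
rewrite -addnn; nia.
Qed.

Lemma nat_growth M C D d : exists n, (M * (C * n + D).+1 ^ d < 2 ^ n)%N.
Proof.
set m := C * d.+1 + D + M + 5.
exists (d.+1 * m).
have Hm4 : (4 <= m)%N by rewrite /m; lia.
have Hsq := sq_le_exp Hm4.
have H1 : ((C * (d.+1 * m) + D).+1 <= 2 ^ m)%N.
  apply: leq_trans Hsq; rewrite /m; nia.
have H2 : (M < 2 ^ m)%N by apply: leq_trans Hsq; rewrite /m; nia.
rewrite [X in (_ < 2 ^ X)%N]mulnC expnM expnS.
have H3 := leq_expr d H1.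
apply: (leq_ltn_trans (leq_mul (leqnn M) H3)).
by rewrite ltn_pmul2r // expn_gt0 expn_gt0.
Qed.

Local Open Scope ring_scope.

Lemma PoszX (m e : nat) : ((m ^ e)%N)%:Z = (m%:Z) ^+ e.
Proof. by elim: e => // e IH; rewrite expnS exprS PoszM IH. Qed.

Definition Mp (p : {poly int}) : nat := (\sum_(i < size p) absz ((p`_i)%R))%N.

Lemma poly_bound (p : {poly int}) (k : nat) :
  p.[k%:Z] <= ((Mp p * k.+1 ^ size p)%N)%:Z.
Proof.
rewrite horner_coef /Mp big_distrl /=.
rewrite (big_morph Posz PoszD (erefl (Posz 0%N))).
apply: ler_sum => i _.
apply: (le_trans (ler_norm _)); rewrite normrM normrX.
rewrite PoszM; apply: ler_pM => //.
  by rewrite exprn_ge0.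
have -> : `|k%:Z| = k%:Z by [].
rewrite -PoszX lez_nat; apply: leq_trans (_ : (k.+1 ^ i <= _)%N); first by apply: leq_expr.
by rewrite leq_pexp2l // ltnW.
Qed.

Lemma poly_growth (p : {poly int}) (C D : nat) :
  exists n, forall k, (k <= C * n + D)%N -> p.[k%:Z] < (2 ^ n)%N%:Z.
Proof.
case: (nat_growth (Mp p) C D (size p)) => n Hn; exists n => k Hk.
apply: (le_lt_trans (poly_bound p k)); rewrite ltz_nat; apply: leq_ltn_trans Hn.
by rewrite leq_mul2l leq_expr ?orbT.
Qed.

Local Close Scope ring_scope.

Import Order.TTheory GRing.Theory Num.Theory.

Definition NoPoly (O : bfset) :=
  ~ exists p : {poly int},
         forall (phi : formula), inPL O phi -> forall k : nat, dag_size phi k ->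
           exists E : seq example, ((size E)%:Z <= p.[k%:Z])%R /\ uniquely_characterizes O E phi.

Lemma In_nth_seq (A : Type) (d : A) (l : seq A) x :
  List.In x l -> exists2 j, (j < size l)%N & nth d l j = x.
Proof.
elim: l => //= a l IH [->|H]; first by exists 0.
by case: (IH H) => j Hj Ej; exists j.+1.
Qed.

Lemma family_nopoly O (fam : nat -> formula) (alt : forall n, {ffun 'I_n.+1 -> bool} -> formula)
  (sel : forall n, assignment -> {ffun 'I_n.+1 -> bool}) (C D : nat) :
  (forall n, inPL O (fam n)) -> (forall n s, inPL O (alt n s)) ->
  (forall n, dagle (fam n) (C * n + D)) ->
  (forall n s, exists V, eval V (alt n s) <> eval V (fam n)) ->
  (forall n s V, eval V (alt n s) <> eval V (fam n) -> sel n V = s) ->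
  NoPoly O.
Proof.
move=> Hfam Halt Hdag Hwit Hsel [p Hp].
case: (poly_growth p C D) => n Hn.
case: (dagle_dag (Hdag n)) => k [Hk Hdk].
case: (Hp _ (Hfam n) k Hdk) => E [HE [Hfit Huniq]].
have Hcov : forall s, s \in map (fun e : example => sel n e.1) E.
  move=> s; case: (Hwit n s) => V HV.
  have [e [He Hne]] : exists e, List.In e E /\ ~ fits (alt n s) e.
    apply: NNPP => Hn'; apply: HV; apply: (Huniq _ (Halt n s)) => e He.
    by apply: NNPP => Hf; apply: Hn'; exists e.
  have Hsel' : sel n e.1 = s.
    apply: (Hsel n s e.1) => Eq; apply: Hne; rewrite /fits Eq; exact: Hfit.
  by rewrite -Hsel'; apply: In_mem; apply: (In_map2 (fun e : example => sel n e.1)).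
have Hcard : (2 ^ n.+1 <= size E)%N.
  have <- : #|{ffun 'I_n.+1 -> bool}| = 2 ^ n.+1 by rewrite card_ffun card_bool card_ord.
  rewrite -(size_map (fun e : example => sel n e.1)).
  apply: leq_trans (card_size _); apply: subset_leq_card; apply/subsetP => s _; exact: Hcov.
have := Hn _ Hk; move: HE => /Order.POrderTheory.le_lt_trans H /H.
rewrite ltz_nat => H2; have := leq_ltn_trans Hcard H2.
by rewrite ltn_exp2l // ltnNge leqnSn.
Qed.

Lemma dag_Var0 : dag_size (Var 0) 1.
Proof.
exists [:: Var 0]; split; first by constructor; [case|constructor].
split => // psi; split; first by case=> [<-|[]]; apply: Defs.sub_refl.
by move/subform_Var ->; left.
Qed.

Lemma tv150 x y z : tv 150 x y z = x (+) y (+) z.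
Proof. by case: x; case: y; case: z. Qed.

Lemma xor_nopoly O : real3 O (tv 150) -> NoPoly O.
Proof.
case=> G [HG EG] [p Hp].
case: (Hp _ (inPL_var O 0) 1 dag_Var0) => E [_ [Hfit Huniq]].
set m := size E.
pose F (i : 'I_(2 ^ m).+1) : {ffun 'I_m -> bool} := [ffun j : 'I_m => (nth (V0, false) E j).1 i.+1].
have [i [j [Nij Eij]]] : exists i j, i <> j /\ F i = F j.
  apply: NNPP => Hn.
  have Hinj : injective F.
    move=> i j Eij; apply: NNPP => Nij; apply: Hn; by exists i, j.
  have := leq_card F Hinj; rewrite card_ffun card_bool !card_ord ltnn.
  by [].
set y := i.+1; set z := j.+1.
have Nyz : y != z by apply/eqP => [[E']]; apply: Nij; apply: val_inj.
have Hyz : forall e, List.In e E -> e.1 y = e.1 z.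
  move=> e He; case: (In_nth_seq (V0, false) He) => idx Hidx Eidx.
  have := congr1 (fun g : {ffun 'I_m -> bool} => g (Ordinal Hidx)) Eij; rewrite /F !ffunE /= Eidx.
  by [].
pose psi := g3 G (Var 0) (Var y) (Var z).
have Epsi : forall V, eval V psi = V 0 (+) V y (+) V z.
  by move=> V; rewrite (real3_g3 _ _ _ HG EG) tv150.
have : equivalent psi (Var 0).
  apply: Huniq; first by apply: inPL_g3 => //; constructor.
  move=> e He; rewrite /fits Epsi Hyz // -addbA addbb addbF; exact: (Hfit e He).
have Nzy : (z == y) = false by rewrite eq_sym; apply/negbTE.
by move=> /(_ (fun v => v == y)); rewrite Epsi /= eqxx Nzy.
Qed.

Definition X (i : nat) := Var (2 * i + 2).
Definition Y (i : nat) := Var (2 * i + 3).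
Definition sv n (s : {ffun 'I_n.+1 -> bool}) (i : nat) : bool := s (inord i).
Definition zz n (s : {ffun 'I_n.+1 -> bool}) (i : nat) := if sv s i then X i else Y i.

Definition Vw n (s : {ffun 'I_n.+1 -> bool}) (b0 b1 : bool) (neg : bool) : assignment :=
  fun v => if v == 0 then b0 else if v == 1 then b1
           else if odd v then (~~ sv s ((v - 3) %/ 2)) (+) neg else sv s ((v - 2) %/ 2) (+) neg.

Lemma Vw_X n (s : {ffun 'I_n.+1 -> bool}) b0 b1 neg i : Vw s b0 b1 neg (2 * i + 2) = sv s i (+) neg.
Proof.
rewrite /Vw; have -> : (2 * i + 2 == 0) = false by lia.
have -> : (2 * i + 2 == 1) = false by lia.
have -> : odd (2 * i + 2) = false by rewrite oddD oddM.
by have -> : (2 * i + 2 - 2) %/ 2 = i by rewrite addnK mulKn.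
Qed.

Lemma Vw_Y n (s : {ffun 'I_n.+1 -> bool}) b0 b1 neg i : Vw s b0 b1 neg (2 * i + 3) = ~~ sv s i (+) neg.
Proof.
rewrite /Vw; have -> : (2 * i + 3 == 0) = false by lia.
have -> : (2 * i + 3 == 1) = false by lia.
have -> : odd (2 * i + 3) = true by rewrite oddD oddM.
by have -> : (2 * i + 3 - 3) %/ 2 = i by rewrite addnK mulKn.
Qed.

Lemma sv_ffun n (s : {ffun 'I_n.+1 -> bool}) (g : nat -> bool) :
  (forall i, (i < n.+1)%N -> sv s i = g i) -> s = [ffun i : 'I_n.+1 => g i].
Proof. by move=> H; apply/ffunP => i; rewrite ffunE -H // /sv inord_val. Qed.

Lemma eval_foldr (op : formula -> formula -> formula) (F : bool -> bool -> bool) V init (T : nat -> formula) l :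
  (forall a b, eval V (op a b) = F (eval V a) (eval V b)) ->
  eval V (foldr op init (map T l)) = foldr (fun i acc => F (eval V (T i)) acc) (eval V init) l.
Proof. by move=> H; elim: l => //= i l <-; rewrite H. Qed.

Lemma dagle_fam (op : formula -> formula -> formula) c init N0 (T : nat -> formula) M n :
  (forall a b Na Nb, dagle a Na -> dagle b Nb -> dagle (op a b) (c + (Na + Nb))) ->
  dagle init N0 -> (forall i, dagle (T i) M) ->
  dagle (foldr op init (map T (iota 1 n))) ((c + M) * n + N0).
Proof.
move=> Hop H0 HT; have H := @dagle_foldr op c init N0 T M (iota 1 n) Hop H0 HT.
rewrite size_iota in H; apply: (dagle_mono H).
by rewrite addnC mulnC.
Qed.

Lemma dagle_g3' G a b c Na Nb Nc N : dagle a Na -> dagle b Nb -> dagle c Nc ->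
  (size (subs G) + (Na + Nb + Nc) <= N)%N -> dagle (g3 G a b c) N.
Proof. by move=> Ha Hb Hc HN; apply: dagle_mono (dagle_g3 G Ha Hb Hc) HN. Qed.

Lemma foldr_gor (b t0 : bool) (t : nat -> bool) l :
  foldr (fun i acc => b && (t i || acc)) (b && t0) l = b && (t0 || has t l).
Proof. by elim: l => [|i l IH] /=; [rewrite orbF|rewrite IH; case: b IH => //= _; rewrite orbCA]. Qed.

Lemma foldr_gand (b t0 : bool) (t : nat -> bool) l :
  foldr (fun i acc => b || (t i && acc)) (b || t0) l = b || (t0 && all t l).
Proof. by elim: l => [|i l IH] /=; [rewrite andbT|rewrite IH; case: b IH => //= _; rewrite andbCA]. Qed.

Lemma foldr_and (t0 : bool) (t : nat -> bool) l :
  foldr (fun i acc => t i && acc) t0 l = t0 && all t l.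
Proof. by elim: l => [|i l IH] /=; [rewrite andbT|rewrite IH andbCA]. Qed.

Lemma foldr_or (t0 : bool) (t : nat -> bool) l :
  foldr (fun i acc => t i || acc) t0 l = t0 || has t l.
Proof. by elim: l => [|i l IH] /=; [rewrite orbF|rewrite IH orbCA]. Qed.

Lemma s10_nopoly O : real3 O (tv 224) -> NoPoly O.
Proof.
case=> G [HG EG].
have Ett : forall x y z, tv 224 x y z = x && (y || z) by do 3 case.
pose AND a b := g3 G a b b.
pose OR a b := g3 G (Var 0) a b.
have EAND : forall V a b, eval V (AND a b) = eval V a && eval V b.
  by move=> V a b; rewrite (real3_g3 _ _ _ HG EG) Ett orbb.
have EOR : forall V a b, eval V (OR a b) = V 0 && (eval V a || eval V b).
  by move=> V a b; rewrite (real3_g3 _ _ _ HG EG) Ett.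
have PAND : forall a b, inPL O a -> inPL O b -> inPL O (AND a b) by move=> a b Ha Hb; apply: inPL_g3.
have POR : forall a b, inPL O a -> inPL O b -> inPL O (OR a b).
  by move=> a b Ha Hb; apply: inPL_g3 => //; constructor.
pose T i := AND (X i) (Y i).
pose fam n := foldr OR (OR (T 0) (T 0)) (map T (iota 1 n)).
pose Zs n (s : {ffun 'I_n.+1 -> bool}) := foldr AND (zz s 0) (map (zz s) (iota 1 n)).
pose alt n s := OR (fam n) (Zs n s).
have PT : forall i, inPL O (T i) by move=> i; apply: PAND; constructor.
have Pfam : forall n, inPL O (fam n).
  move=> n; rewrite /fam; elim: (iota 1 n) => /= [|i l IH]; apply: POR => //.
have Efam : forall V n, eval V (fam n) = V 0 && has (fun i => eval V (T i)) (iota 0 n.+1).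
  move=> V n; rewrite /fam (@eval_foldr OR (fun x y => V 0 && (x || y)) V _ T _ (EOR V)) EOR orbb.
  by rewrite (@foldr_gor (V 0) (eval V (T 0)) (fun i => eval V (T i))).
have ET : forall V i, eval V (T i) = V (2 * i + 2) && V (2 * i + 3) by move=> V i; rewrite EAND.
have EZ : forall V n s, eval V (Zs n s) = all (fun i => eval V (zz s i)) (iota 0 n.+1).
  move=> V n s; rewrite /Zs (@eval_foldr AND (fun x y => x && y) V _ (zz s) _ (EAND V)).
  by rewrite (@foldr_and (eval V (zz s 0)) (fun i => eval V (zz s i))).
have Ealt : forall V n s, eval V (alt n s) = V 0 && (eval V (fam n) || eval V (Zs n s)) by move=> *; rewrite EOR.
apply: (@family_nopoly O fam alt (fun n V => [ffun i : 'I_n.+1 => V (2 * i + 2)])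
          (size (subs G) + 1 + (size (subs G) + 3)) (size (subs G) + 1 + 2 * (size (subs G) + 3))).
- exact: Pfam.
- by move=> n s; apply: POR => //; rewrite /Zs; elim: (iota 1 n) => /= [|i l IH];
    [rewrite /zz; case: (sv s 0); constructor|apply: PAND => //; rewrite /zz; case: (sv s i); constructor].
- move=> n; rewrite /fam.
  have HT : forall i, dagle (T i) (size (subs G) + 3).
    by move=> i; apply: dagle_g3' (dagle_Var _) (dagle_Var _) (dagle_Var _) _.
  apply: (dagle_fam (c := size (subs G) + 1)).
  + move=> a b Na Nb Ha Hb; apply: dagle_g3' (dagle_Var 0) Ha Hb _; lia.
  + apply: dagle_g3' (dagle_Var 0) (HT 0) (HT 0) _; lia.
  + exact: HT.
- move=> n s; exists (Vw s true false false).
  rewrite Ealt Efam EZ.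
  have H1 : has (fun i => eval (Vw s true false false) (T i)) (iota 0 n.+1) = false.
    apply/hasPn => i _; rewrite ET Vw_X Vw_Y; by case: (sv s i).
  have H2 : all (fun i => eval (Vw s true false false) (zz s i)) (iota 0 n.+1).
    apply/allP => i _; rewrite /zz; case E: (sv s i) => /=; by rewrite ?Vw_X ?Vw_Y E.
  by rewrite H1 H2.
move=> n s V; rewrite Ealt; case E0: (V 0) => /=; last by rewrite Efam E0.
case Ef: (eval V (fam n)) => //=; rewrite EZ; case: allP => [Hall _|_ H]; last by case: H.
move: Ef; rewrite Efam E0 andTb => /negbT /hasPn Hno.
apply: esym; apply: (@sv_ffun n s (fun i => V (2 * i + 2))) => i Hi.
have Hi' : i \in iota 0 n.+1 by rewrite mem_iota.
move: (Hall i Hi') (Hno i Hi'); rewrite ET /zz; case: (sv s i) => /=.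
  by move=> ->.
by move=> ->; rewrite andbT => /negbTE.
Qed.

Lemma s00_nopoly O : real3 O (tv 248) -> NoPoly O.
Proof.
case=> G [HG EG].
have Ett : forall x y z, tv 248 x y z = x || (y && z) by do 3 case.
pose OR a b := g3 G a b b.
pose AND a b := g3 G (Var 0) a b.
have EOR : forall V a b, eval V (OR a b) = eval V a || eval V b.
  by move=> V a b; rewrite (real3_g3 _ _ _ HG EG) Ett andbb.
have EAND : forall V a b, eval V (AND a b) = V 0 || (eval V a && eval V b).
  by move=> V a b; rewrite (real3_g3 _ _ _ HG EG) Ett.
have POR : forall a b, inPL O a -> inPL O b -> inPL O (OR a b) by move=> a b Ha Hb; apply: inPL_g3.
have PAND : forall a b, inPL O a -> inPL O b -> inPL O (AND a b).
  by move=> a b Ha Hb; apply: inPL_g3 => //; constructor.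
pose T i := OR (X i) (Y i).
pose fam n := foldr AND (AND (T 0) (T 0)) (map T (iota 1 n)).
pose Zs n (s : {ffun 'I_n.+1 -> bool}) := foldr OR (zz s 0) (map (zz s) (iota 1 n)).
pose alt n s := AND (fam n) (Zs n s).
have PT : forall i, inPL O (T i) by move=> i; apply: POR; constructor.
have Pfam : forall n, inPL O (fam n).
  move=> n; rewrite /fam; elim: (iota 1 n) => /= [|i l IH]; apply: PAND => //.
have Efam : forall V n, eval V (fam n) = V 0 || all (fun i => eval V (T i)) (iota 0 n.+1).
  move=> V n; rewrite /fam (@eval_foldr AND (fun x y => V 0 || (x && y)) V _ T _ (EAND V)) EAND andbb.
  by rewrite (@foldr_gand (V 0) (eval V (T 0)) (fun i => eval V (T i))).
have ET : forall V i, eval V (T i) = V (2 * i + 2) || V (2 * i + 3) by move=> V i; rewrite EOR.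
have EZ : forall V n s, eval V (Zs n s) = has (fun i => eval V (zz s i)) (iota 0 n.+1).
  move=> V n s; rewrite /Zs (@eval_foldr OR (fun x y => x || y) V _ (zz s) _ (EOR V)).
  by rewrite (@foldr_or (eval V (zz s 0)) (fun i => eval V (zz s i))).
have Ealt : forall V n s, eval V (alt n s) = V 0 || (eval V (fam n) && eval V (Zs n s)) by move=> *; rewrite EAND.
apply: (@family_nopoly O fam alt (fun n V => [ffun i : 'I_n.+1 => ~~ V (2 * i + 2)])
          (size (subs G) + 1 + (size (subs G) + 3)) (size (subs G) + 1 + 2 * (size (subs G) + 3))).
- exact: Pfam.
- by move=> n s; apply: PAND => //; rewrite /Zs; elim: (iota 1 n) => /= [|i l IH];
    [rewrite /zz; case: (sv s 0); constructor|apply: POR => //; rewrite /zz; case: (sv s i); constructor].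
- move=> n; rewrite /fam.
  have HT : forall i, dagle (T i) (size (subs G) + 3).
    by move=> i; apply: dagle_g3' (dagle_Var _) (dagle_Var _) (dagle_Var _) _.
  apply: (dagle_fam (c := size (subs G) + 1)).
  + move=> a b Na Nb Ha Hb; apply: dagle_g3' (dagle_Var 0) Ha Hb _; lia.
  + apply: dagle_g3' (dagle_Var 0) (HT 0) (HT 0) _; lia.
  + exact: HT.
- move=> n s; exists (Vw s false false true).
  rewrite Ealt Efam EZ.
  have H1 : all (fun i => eval (Vw s false false true) (T i)) (iota 0 n.+1).
    apply/allP => i _; rewrite ET Vw_X Vw_Y; by case: (sv s i).
  have H2 : has (fun i => eval (Vw s false false true) (zz s i)) (iota 0 n.+1) = false.
    apply/hasPn => i _; rewrite /zz; case E: (sv s i) => /=; by rewrite ?Vw_X ?Vw_Y E.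
  by rewrite H1 H2.
move=> n s V; rewrite Ealt; case E0: (V 0) => /=; first by rewrite Efam E0.
case Ef: (eval V (fam n)) => //=; rewrite EZ; case: hasP => [_ H|Hno _]; first by case: H.
move: Ef; rewrite Efam E0 orFb => /allP Hall.
apply: esym; apply: (@sv_ffun n s (fun i => ~~ V (2 * i + 2))) => i Hi.
have Hi' : i \in iota 0 n.+1 by rewrite mem_iota.
have Hz : ~~ eval V (zz s i) by apply/negP => Hz; apply: Hno; exists i.
move: (Hall i Hi') Hz; rewrite ET /zz; case: (sv s i) => /=.
  by move=> _ /negbTE ->.
by move=> H /negbTE E; rewrite E orbF in H; rewrite H.
Qed.

Lemma maj_nopoly O : real3 O (tv 232) -> NoPoly O.
Proof.
case=> G [HG EG].
have Ett : forall x y z, tv 232 x y z = if z then x || y else x && y by do 3 case.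
pose AND a b := g3 G a b (Var 1).
pose OR a b := g3 G a b (Var 0).
have EAND : forall V a b, eval V (AND a b) = if V 1 then eval V a || eval V b else eval V a && eval V b.
  by move=> V a b; rewrite (real3_g3 _ _ _ HG EG) Ett.
have EOR : forall V a b, eval V (OR a b) = if V 0 then eval V a || eval V b else eval V a && eval V b.
  by move=> V a b; rewrite (real3_g3 _ _ _ HG EG) Ett.
have PAND : forall a b, inPL O a -> inPL O b -> inPL O (AND a b).
  by move=> a b Ha Hb; apply: inPL_g3 => //; constructor.
have POR : forall a b, inPL O a -> inPL O b -> inPL O (OR a b).
  by move=> a b Ha Hb; apply: inPL_g3 => //; constructor.
pose T i := AND (X i) (Y i).
pose fam n := foldr OR (T 0) (map T (iota 1 n)).
pose Zs n (s : {ffun 'I_n.+1 -> bool}) := foldr AND (zz s 0) (map (zz s) (iota 1 n)).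
pose alt n s := OR (fam n) (Zs n s).
have PT : forall i, inPL O (T i) by move=> i; apply: PAND; constructor.
have Pfam : forall n, inPL O (fam n).
  move=> n; rewrite /fam; elim: (iota 1 n) => /= [|i l IH] //; apply: POR => //.
have Efam : forall V n, eval V (fam n) =
    if V 0 then has (fun i => eval V (T i)) (iota 0 n.+1) else all (fun i => eval V (T i)) (iota 0 n.+1).
  move=> V n; rewrite /fam (@eval_foldr OR (fun x y => if V 0 then x || y else x && y) V _ T _ (EOR V)).
  case: (V 0).
    by rewrite (@foldr_or (eval V (T 0)) (fun i => eval V (T i))).
  by rewrite (@foldr_and (eval V (T 0)) (fun i => eval V (T i))).
have ET : forall V i, eval V (T i) = if V 1 then V (2 * i + 2) || V (2 * i + 3) else V (2 * i + 2) && V (2 * i + 3).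
  by move=> V i; rewrite EAND.
have EZ : forall V n s, eval V (Zs n s) =
    if V 1 then has (fun i => eval V (zz s i)) (iota 0 n.+1) else all (fun i => eval V (zz s i)) (iota 0 n.+1).
  move=> V n s; rewrite /Zs (@eval_foldr AND (fun x y => if V 1 then x || y else x && y) V _ (zz s) _ (EAND V)).
  case: (V 1).
    by rewrite (@foldr_or (eval V (zz s 0)) (fun i => eval V (zz s i))).
  by rewrite (@foldr_and (eval V (zz s 0)) (fun i => eval V (zz s i))).
have Ealt : forall V n s, eval V (alt n s) =
    if V 0 then eval V (fam n) || eval V (Zs n s) else eval V (fam n) && eval V (Zs n s) by move=> *; rewrite EOR.
apply: (@family_nopoly O fam alt (fun n V => [ffun i : 'I_n.+1 => if V 1 then ~~ V (2 * i + 2) else V (2 * i + 2)])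
          (size (subs G) + 1 + (size (subs G) + 3)) (size (subs G) + 3)).
- exact: Pfam.
- by move=> n s; apply: POR => //; rewrite /Zs; elim: (iota 1 n) => /= [|i l IH];
    [rewrite /zz; case: (sv s 0); constructor|apply: PAND => //; rewrite /zz; case: (sv s i); constructor].
- move=> n; rewrite /fam.
  have HT : forall i, dagle (T i) (size (subs G) + 3).
    by move=> i; apply: dagle_g3' (dagle_Var _) (dagle_Var _) (dagle_Var _) _.
  apply: (dagle_fam (c := size (subs G) + 1)).
  + move=> a b Na Nb Ha Hb; apply: dagle_g3' Ha Hb (dagle_Var 0) _; lia.
  + exact: HT.
  + exact: HT.
- move=> n s; exists (Vw s true false false).
  rewrite Ealt Efam EZ.
  have H1 : has (fun i => eval (Vw s true false false) (T i)) (iota 0 n.+1) = false.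
    apply/hasPn => i _; rewrite ET Vw_X Vw_Y; by case: (sv s i).
  have H2 : all (fun i => eval (Vw s true false false) (zz s i)) (iota 0 n.+1).
    apply/allP => i _; rewrite /zz; case E: (sv s i) => /=; by rewrite ?Vw_X ?Vw_Y E.
  have -> : Vw s true false false 0 = true by [].
  have -> : Vw s true false false 1 = false by [].
  by rewrite H1 H2.
move=> n s V; rewrite Ealt.
have Hsub : forall i, eval V (zz s i) ==> (V (2 * i + 2) || V (2 * i + 3)).
  by move=> i; rewrite /zz; case: (sv s i) => /=; apply/implyP => ->; rewrite ?orbT.
case E0: (V 0).
  case Ef: (eval V (fam n)) => //=; rewrite EZ; move: Ef; rewrite Efam E0.
  case E1: (V 1).
    move=> /negbT /hasPn Hno; case: hasP => [[i Hi Hz] _|_ H]; last by case: H.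
    exfalso.
    by move: (Hno i Hi) (implyP (Hsub i) Hz); rewrite ET E1 => /negbTE ->.
  move=> /negbT /hasPn Hno; case: allP => [Hall _|_ H]; last by case: H.
  suff Hs : s = [ffun i : 'I_n.+1 => V (2 * i + 2)] by rewrite Hs; apply/ffunP => i; rewrite !ffunE.
  apply: (@sv_ffun n s (fun i => V (2 * i + 2))) => i Hi.
  have Hi' : i \in iota 0 n.+1 by rewrite mem_iota.
  move: (Hno i Hi') (Hall i Hi'); rewrite ET E1 /zz; case: (sv s i) => /=.
    by move=> _ ->.
  by move=> H Hy; rewrite Hy andbT in H; rewrite (negbTE H).
case Ef: (eval V (fam n)) => //=; rewrite EZ; move: Ef; rewrite Efam E0.
case E1: (V 1).
  move=> /allP Hall; case: hasP => [_ H|Hno _]; first by case: H.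
  suff Hs : s = [ffun i : 'I_n.+1 => ~~ V (2 * i + 2)] by rewrite Hs; apply/ffunP => i; rewrite !ffunE.
  apply: (@sv_ffun n s (fun i => ~~ V (2 * i + 2))) => i Hi.
  have Hi' : i \in iota 0 n.+1 by rewrite mem_iota.
  have Hz : ~~ eval V (zz s i) by apply/negP => Hz; apply: Hno; exists i.
  move: (Hall i Hi') Hz; rewrite ET E1 /zz; case: (sv s i) => /=.
    by move=> _ /negbTE ->.
  by move=> H /negbTE E; rewrite E orbF in H; rewrite H.
move=> /allP Hall; case: allP => [_ H|Hno _]; first by case: H.
exfalso; apply: Hno => i Hi; move: (Hall i Hi); rewrite ET E1 /zz.
by case: (sv s i) => /= /andP [].
Qed.

Lemma part2 (O : bfset) :
  ~ (preceq O set_and_top_bot \/ preceq O set_or_top_bot \/ preceq O set_neg_bot) -> NoPoly O.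
Proof.
move=> H; case: (target_real H) => tg; rewrite !inE.
case/orP => [/eqP ->|/orP [/eqP ->|/orP [/eqP ->|/eqP ->]]].
- exact: maj_nopoly.
- exact: xor_nopoly.
- exact: s10_nopoly.
- exact: s00_nopoly.
Qed.

Local Open Scope ring_scope.

Theorem theorem3p20 (O : bfset) :
  ((preceq O set_and_top_bot \/ preceq O set_or_top_bot \/ preceq O set_neg_bot) ->
     forall (phi : formula), inPL O phi -> forall k : nat, dag_size phi k ->
       exists E : seq example, (size E <= k.+1)%N /\ uniquely_characterizes O E phi)
  /\
  (~ (preceq O set_and_top_bot \/ preceq O set_or_top_bot \/ preceq O set_neg_bot) ->
     ~ exists p : {poly int},
         forall (phi : formula), inPL O phi -> forall k : nat, dag_size phi k ->
           exists E : seq example, (size E)%:Z <= p.[k%:Z] /\ uniquely_characterizes O E phi).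
Proof.
split; [exact: part1|exact: part2].
Qed.
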